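(* Assume Hypotheses 1, 2 and 3 (see context). For any $x\in\Gamma$ and each $\mathbf{z}\in\mathbb{R}^m$, the set $T(x)\cap\mathcal{I}(\mathbf{z})$ contains exactly one point.
   Context: System $\dot x=F(x)$ with $F=(f,g)$, i.e. $\dot a=f(a,z)$, $\dot z=g(a,z)$, $(a,z)\in\mathbb{R}^n\times\mathbb{R}^m$, $X=\mathbb{R}^n\times\mathbb{R}^m$, flow $\Phi(t,x)$. Euclidean inner product, norm, operator norm. $\mathcal{L}(x_1,x_2)=\|a_2-a_1\|^2-\|z_2-z_1\|^2$, $\mathcal{C}(x)=\{x'\in X:\mathcal{L}(x',x)\ge0\}$, $\mathbf{0}$ the zero vector of $X$; $\Pi(a,z)=a$, $\Pi_\perp(a,z)=z$; $\mathbb{B}_d(x)=\{(a',z'):\|a'-a\|\le d,\|z'-z\|\le d\}$. $\Gamma\subseteq U$ positively invariant means $\Phi(t,x)$ is defined for all $t\ge0$ for $x\in\Gamma$ and $\Phi(t,\Gamma)\subseteq\Gamma$. Hypothesis 1: $U$ open and convex, and there is $d>0$ with $\mathcal{C}(x)\cap U\subset\mathbb{B}_d(x)$ for all $x\in U$. Hypothesis 2: $f,g$ are $C^1$ on $U$; there exist continuous $\alpha>0$, $\ell\ge0$ on $U$ and $c_1>0$ with, for all $x\in U$: $\langle a',D_af(x)a'\rangle\ge\alpha(x)\|a'\|^2$; $\langle z',D_zg(x)z'\rangle\le\ell(x)\|z'\|^2$; $\alpha(x)\ge\ell(x)+\|D_zf(x)\|+\|D_ag(x)\|+c_1$. Hypothesis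 3: $\Gamma\subset U$ is positively invariant and $\Pi_\perp(\Gamma)=\Pi_\perp(U)$. For $x\in\Gamma$, $Q(t,x)$ ($t\ge0$) denotes the fundamental matrix solution of the variational equation $\dot{\mathbf{x}}=DF(\Phi(t,x))\mathbf{x}$ with $Q(0,x)=I$. For $x\in\Gamma$, $T(x):=\{\mathbf{x}\in X: \mathcal{L}(Q(t,x)\mathbf{x},\mathbf{0})\le0\text{ for all }t\ge0\}$. For $\mathbf{z}\in\mathbb{R}^m$, $\mathcal{I}(\mathbf{z}):=\{(\mathbf{a},\mathbf{z}):\mathbf{a}\in\mathbb{R}^n\}$. *)

(* Defs.v *)
(* Stdlib Reals.
   Vectors of R^k are modelled as functions nat -> R whose coordinates
   of index >= k vanish ("supp k v").  A point of X = R^n x R^m is a pair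
   (a, z) of such vectors. *)
From Stdlib Require Import Reals.
Open Scope R_scope.

Definition vec := nat -> R.
Definition pt : Type := (vec * vec)%type.

Definition supp (k : nat) (v : vec) : Prop := forall i, (k <= i)%nat -> v i = 0.

Fixpoint sumR (k : nat) (h : nat -> R) : R :=
  match k with O => 0 | S k' => sumR k' h + h k' end.

Definition dot (k : nat) (u v : vec) : R := sumR k (fun i => u i * v i).
Definition norm (k : nat) (v : vec) : R := sqrt (dot k v v).

Definition vzero : vec := fun _ => 0.
Definition vadd (u v : vec) : vec := fun i => u i + v i.
Definition vsub (u v : vec) : vec := fun i => u i - v i.
Definition vscal (c : R) (u : vec) : vec := fun i => c * u i.

Definition pzero : pt := (vzero, vzero).
Definition padd (p q : pt) : pt := (vadd (fst p) (fst q), vadd (snd p) (snd q)).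
Definition psub (p q : pt) : pt := (vsub (fst p) (fst q), vsub (snd p) (snd q)).
Definition pscal (c : R) (p : pt) : pt := (vscal c (fst p), vscal c (snd p)).

Definition inX (n m : nat) (p : pt) : Prop := supp n (fst p) /\ supp m (snd p).
Definition normX (n m : nat) (p : pt) : R :=
  sqrt (dot n (fst p) (fst p) + dot m (snd p) (snd p)).

Definition Lyap (n m : nat) (x1 x2 : pt) : R :=
  (norm n (vsub (fst x2) (fst x1)))^2 - (norm m (vsub (snd x2) (snd x1)))^2.

Definition cone (n m : nat) (x : pt) : pt -> Prop :=
  fun x' => inX n m x' /\ Lyap n m x' x >= 0.

Definition ball (n m : nat) (d : R) (x : pt) : pt -> Prop :=
  fun x' => inX n m x' /\ norm n (vsub (fst x') (fst x)) <= d
            /\ norm m (vsub (snd x') (snd x)) <= d.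

Definition open_X (n m : nat) (U : pt -> Prop) : Prop :=
  forall x, U x -> exists eps, 0 < eps /\
    forall y, inX n m y -> normX n m (psub y x) < eps -> U y.

Definition convex (U : pt -> Prop) : Prop :=
  forall x y t, U x -> U y -> 0 <= t <= 1 ->
    U (padd (pscal (1 - t) x) (pscal t y)).

Definition Hyp1 (n m : nat) (U : pt -> Prop) : Prop :=
  (forall x, U x -> inX n m x) /\ open_X n m U /\ convex U /\
  exists d, 0 < d /\
    forall x, U x -> forall x', cone n m x x' -> U x' -> ball n m d x x'.

Definition is_deriv (n m k : nat) (G : pt -> vec) (x : pt) (L : pt -> vec) : Prop :=
  (forall h, inX n m h -> supp k (L h)) /\
  (forall h1 h2, inX n m h1 -> inX n m h2 -> L (padd h1 h2) = vadd (L h1) (L h2)) /\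
  (forall c h, inX n m h -> L (pscal c h) = vscal c (L h)) /\
  (forall eps, 0 < eps -> exists delta, 0 < delta /\
     forall h, inX n m h -> normX n m h < delta ->
       norm k (vsub (vsub (G (padd x h)) (G x)) (L h)) <= eps * normX n m h).

Definition C1_on (n m k : nat) (U : pt -> Prop) (G : pt -> vec) (DG : pt -> pt -> vec) : Prop :=
  (forall x, U x -> supp k (G x)) /\
  (forall x, U x -> is_deriv n m k G x (DG x)) /\
  (forall x, U x -> forall eps, 0 < eps -> exists delta, 0 < delta /\
     forall y, U y -> normX n m (psub y x) < delta ->
       forall h, inX n m h -> norm k (vsub (DG y h) (DG x h)) <= eps * normX n m h).

Definition cont_on (n m : nat) (U : pt -> Prop) (r : pt -> R) : Prop :=
  forall x, U x -> forall eps, 0 < eps -> exists delta, 0 < delta /\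
    forall y, U y -> normX n m (psub y x) < delta -> Rabs (r y - r x) < eps.

Definition is_opnorm (p q : nat) (A : vec -> vec) (r : R) : Prop :=
  is_lub (fun y => exists v, supp p v /\ norm p v <= 1 /\ y = norm q (A v)) r.

(* Hypothesis 2; Df, Dg are the derivatives of f, g, so that
   D_a f(x) a' = Df x (a',0), D_z f(x) z' = Df x (0,z'), etc. *)
Definition Hyp2 (n m : nat) (U : pt -> Prop) (f g : pt -> vec) (Df Dg : pt -> pt -> vec) : Prop :=
  C1_on n m n U f Df /\ C1_on n m m U g Dg /\
  exists (alpha ell : pt -> R) (c1 : R),
    cont_on n m U alpha /\ cont_on n m U ell /\ 0 < c1 /\
    forall x, U x ->
      0 < alpha x /\ 0 <= ell x /\
      (forall a', supp n a' -> dot n a' (Df x (a', vzero)) >= alpha x * (norm n a')^2) /\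
      (forall z', supp m z' -> dot m z' (Dg x (vzero, z')) <= ell x * (norm m z')^2) /\
      exists r1 r2,
        is_opnorm m n (fun z' => Df x (vzero, z')) r1 /\
        is_opnorm n m (fun a' => Dg x (a', vzero)) r2 /\
        alpha x >= ell x + r1 + r2 + c1.

Definition deriv_nonneg (y : R -> R) (t dy : R) : Prop :=
  forall eps, 0 < eps -> exists delta, 0 < delta /\
    forall s, 0 <= s -> s <> t -> Rabs (s - t) < delta ->
      Rabs ((y s - y t) / (s - t) - dy) < eps.

(* phi(., x) is the forward solution of x' = F(x) = (f(x), g(x)) from x,
   defined for all t >= 0 and remaining in Gam (positive invariance). *)
Definition flow_inv (n m : nat) (Gam : pt -> Prop) (f g : pt -> vec)
  (phi : R -> pt -> pt) : Prop :=
  forall x, Gam x -> phi 0 x = x /\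
    forall t, 0 <= t -> Gam (phi t x) /\
      (forall i, (i < n)%nat -> deriv_nonneg (fun s => fst (phi s x) i) t (f (phi t x) i)) /\
      (forall i, (i < m)%nat -> deriv_nonneg (fun s => snd (phi s x) i) t (g (phi t x) i)).

Definition Hyp3 (n m : nat) (U Gam : pt -> Prop) (f g : pt -> vec) (phi : R -> pt -> pt) : Prop :=
  (forall x, Gam x -> U x) /\ flow_inv n m Gam f g phi /\
  (forall zz, (exists a, Gam (a, zz)) <-> (exists a, U (a, zz))).

(* Q t x v = Q(t,x) v : solution of the variational equation
   v' = DF(phi(t,x)) v with initial value v. *)
Definition fund_sol (n m : nat) (Gam : pt -> Prop) (Df Dg : pt -> pt -> vec)
  (phi : R -> pt -> pt) (Q : R -> pt -> pt -> pt) : Prop :=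
  forall x, Gam x -> forall v, inX n m v -> Q 0 x v = v /\
    forall t, 0 <= t -> inX n m (Q t x v) /\
      (forall i, (i < n)%nat ->
         deriv_nonneg (fun s => fst (Q s x v) i) t (Df (phi t x) (Q t x v) i)) /\
      (forall i, (i < m)%nat ->
         deriv_nonneg (fun s => snd (Q s x v) i) t (Dg (phi t x) (Q t x v) i)).

Definition Tset (n m : nat) (Q : R -> pt -> pt -> pt) (x : pt) : pt -> Prop :=
  fun v => inX n m v /\ forall t, 0 <= t -> Lyap n m (Q t x v) pzero <= 0.

Definition Ifib (n m : nat) (zz : vec) : pt -> Prop :=
  fun p => inX n m p /\ snd p = zz.

(* Main.v *)
Require Import Defs.
From Stdlib Require Import Reals Lra Lia Psatz FunctionalExtensionality Classical IndefiniteDescription.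
Open Scope R_scope.

Lemma sumR_ext k f g : (forall i, (i < k)%nat -> f i = g i) -> sumR k f = sumR k g.
Proof. induction k; simpl; intros H; auto. rewrite IHk, H; auto; lia. Qed.

Lemma sumR_plus k f g : sumR k (fun i => f i + g i) = sumR k f + sumR k g.
Proof. induction k; simpl; [lra|]. rewrite IHk; lra. Qed.

Lemma sumR_minus k f g : sumR k (fun i => f i - g i) = sumR k f - sumR k g.
Proof. induction k; simpl; [lra|]. rewrite IHk; lra. Qed.

Lemma sumR_scal k c f : sumR k (fun i => c * f i) = c * sumR k f.
Proof. induction k; simpl; [lra|]. rewrite IHk; lra. Qed.

Lemma sumR_le k f g : (forall i, (i < k)%nat -> f i <= g i) -> sumR k f <= sumR k g.
Proof. induction k; simpl; intros H; [lra|]. assert (f k <= g k) by (apply H; lia).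
 assert (sumR k f <= sumR k g) by (apply IHk; intros; apply H; lia). lra. Qed.

Lemma sumR_nonneg k f : (forall i, (i < k)%nat -> 0 <= f i) -> 0 <= sumR k f.
Proof. intros H. replace 0 with (sumR k (fun _ => 0)). apply sumR_le; auto.
 induction k; simpl; auto. rewrite IHk; [lra|]. intros; apply H; lia. Qed.

Lemma sumR_zero k : sumR k (fun _ => 0) = 0.
Proof. induction k; simpl; auto. rewrite IHk; lra. Qed.

Lemma sumR_term_le k f j : (forall i, (i < k)%nat -> 0 <= f i) -> (j < k)%nat -> f j <= sumR k f.
Proof. induction k; simpl; intros H Hj; [lia|].
 destruct (Nat.eq_dec j k) as [->|Hne].
 - assert (0 <= sumR k f) by (apply sumR_nonneg; intros; apply H; lia). lra.
 - assert (f j <= sumR k f) by (apply IHk; [intros; apply H|]; lia). assert (0 <= f k) by (apply H; lia). lra.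
Qed.

Lemma sumR_zero_inv k f : (forall i, (i < k)%nat -> 0 <= f i) -> sumR k f = 0 -> forall i, (i < k)%nat -> f i = 0.
Proof. intros H E i Hi. pose proof (sumR_term_le k f i H Hi). pose proof (H i Hi). lra. Qed.

Definition nsq k v := dot k v v.

Lemma nsq_nonneg k v : 0 <= nsq k v.
Proof. unfold nsq, dot. apply sumR_nonneg. intros; nra. Qed.

Lemma norm_nonneg k v : 0 <= norm k v.
Proof. unfold norm. apply sqrt_pos. Qed.

Lemma norm_sq k v : norm k v ^ 2 = nsq k v.
Proof. unfold norm. rewrite pow2_sqrt; auto. apply nsq_nonneg. Qed.

Lemma norm_sq' k v : norm k v * norm k v = nsq k v.
Proof. rewrite <- norm_sq. ring. Qed.

Lemma dot_sym k u v : dot k u v = dot k v u.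
Proof. unfold dot. apply sumR_ext. intros; ring. Qed.

Lemma dot_add_r k u v w : dot k u (vadd v w) = dot k u v + dot k u w.
Proof. unfold dot, vadd. rewrite <- sumR_plus. apply sumR_ext; intros; ring. Qed.

Lemma dot_sub_r k u v w : dot k u (vsub v w) = dot k u v - dot k u w.
Proof. unfold dot, vsub. rewrite <- sumR_minus. apply sumR_ext; intros; ring. Qed.

Lemma dot_scal_r k u c v : dot k u (vscal c v) = c * dot k u v.
Proof. unfold dot, vscal. rewrite <- sumR_scal. apply sumR_ext; intros; ring. Qed.

Lemma dot_add_l k u v w : dot k (vadd v w) u = dot k v u + dot k w u.
Proof. rewrite !(dot_sym k _ u). apply dot_add_r. Qed.
Lemma dot_sub_l k u v w : dot k (vsub v w) u = dot k v u - dot k w u.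
Proof. rewrite !(dot_sym k _ u). apply dot_sub_r. Qed.
Lemma dot_scal_l k u c v : dot k (vscal c v) u = c * dot k v u.
Proof. rewrite !(dot_sym k _ u). apply dot_scal_r. Qed.

Lemma CS_sq k u v : dot k u v ^ 2 <= nsq k u * nsq k v.
Proof.
  assert (Hq : forall l, 0 <= nsq k u - 2 * l * dot k u v + l * l * nsq k v).
  { intros l. pose proof (nsq_nonneg k (vsub u (vscal l v))). unfold nsq in *.
    rewrite dot_sub_l, !dot_sub_r, !dot_scal_l, !dot_scal_r in H. rewrite (dot_sym k v u) in H. nra. }
  pose proof (nsq_nonneg k u). pose proof (nsq_nonneg k v).
  destruct (Req_dec (nsq k v) 0) as [E|E].
  - rewrite E. destruct (Req_dec (dot k u v) 0) as [E2|E2]. rewrite E2; nra.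
    specialize (Hq ((nsq k u + 1) / (2 * dot k u v))). rewrite E in Hq.
    replace (nsq k u - 2 * ((nsq k u + 1) / (2 * dot k u v)) * dot k u v +
      (nsq k u + 1) / (2 * dot k u v) * ((nsq k u + 1) / (2 * dot k u v)) * 0) with (-1) in Hq by (field; auto). lra.
  - specialize (Hq (dot k u v / nsq k v)). 
    assert (0 < nsq k v) by lra.
    assert (0 <= nsq k u - dot k u v ^ 2 / nsq k v).
    { replace (nsq k u - dot k u v ^ 2 / nsq k v) with
        (nsq k u - 2 * (dot k u v / nsq k v) * dot k u v + (dot k u v / nsq k v) * (dot k u v / nsq k v) * nsq k v) by (field; lra). auto. }
    apply Rmult_le_compat_r with (r := nsq k v) in H2; [|lra].
    replace ((nsq k u - dot k u v ^ 2 / nsq k v) * nsq k v) with (nsq k u * nsq k v - dot k u v ^2) in H2 by (field; lra). lra.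
Qed.

Lemma CS k u v : Rabs (dot k u v) <= norm k u * norm k v.
Proof.
  pose proof (CS_sq k u v). rewrite <- !norm_sq' in H.
  pose proof (norm_nonneg k u); pose proof (norm_nonneg k v).
  assert (0 <= norm k u * norm k v) by nra.
  unfold Rabs; destruct (Rcase_abs (dot k u v)); nra.
Qed.

Lemma CS_l k u v : dot k u v <= norm k u * norm k v.
Proof. pose proof (CS k u v). pose proof (Rle_abs (dot k u v)). lra. Qed.
Lemma CS_ge k u v : - (norm k u * norm k v) <= dot k u v.
Proof. pose proof (CS k u v). pose proof (Rabs_Ropp (dot k u v)); pose proof (Rle_abs (- dot k u v)). lra. Qed.

Lemma nsq_add k u v : nsq k (vadd u v) = nsq k u + 2 * dot k u v + nsq k v.
Proof. unfold nsq. rewrite dot_add_l, !dot_add_r. rewrite (dot_sym k v u). ring. Qed.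

Lemma nsq_sub k u v : nsq k (vsub u v) = nsq k u - 2 * dot k u v + nsq k v.
Proof. unfold nsq. rewrite dot_sub_l, !dot_sub_r. rewrite (dot_sym k v u). ring. Qed.

Lemma sqrt_le_of_sq x y : 0 <= y -> 0 <= x -> x <= y * y -> sqrt x <= y.
Proof. intros Hy Hx H. rewrite <- (sqrt_square y) by auto. apply sqrt_le_1_alt. auto. Qed.

Lemma norm_le_of k v y : 0 <= y -> nsq k v <= y * y -> norm k v <= y.
Proof. intros. unfold norm. apply sqrt_le_of_sq; auto. apply nsq_nonneg. Qed.

Lemma norm_triangle k u v : norm k (vadd u v) <= norm k u + norm k v.
Proof.
  apply norm_le_of. pose proof (norm_nonneg k u); pose proof (norm_nonneg k v); lra.
  rewrite nsq_add. pose proof (CS_l k u v). rewrite <- !norm_sq'. nra.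
Qed.

Lemma coord_le k v i : (i < k)%nat -> v i * v i <= nsq k v.
Proof. intros. unfold nsq, dot. apply (sumR_term_le k (fun i => v i * v i)); auto. intros; nra. Qed.

Lemma nsq_zero_coord k v : nsq k v = 0 -> forall i, (i < k)%nat -> v i = 0.
Proof. intros E i Hi. pose proof (coord_le k v i Hi). pose proof (nsq_nonneg k v). nra. Qed.

Lemma norm_zero_coord k v : norm k v = 0 -> forall i, (i < k)%nat -> v i = 0.
Proof. intros E. apply nsq_zero_coord. rewrite <- norm_sq, E. ring. Qed.

Lemma nsq_scal k c v : nsq k (vscal c v) = c * c * nsq k v.
Proof. unfold nsq. rewrite dot_scal_l, dot_scal_r. ring. Qed.

Lemma norm_scal k c v : norm k (vscal c v) = Rabs c * norm k v.
Proof. unfold norm. fold (nsq k (vscal c v)). fold (nsq k v). rewrite nsq_scal.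
  rewrite sqrt_mult_alt by nra. rewrite <- (sqrt_Rsqr_abs c). reflexivity. Qed.

Lemma norm_opp k v : norm k (vscal (-1) v) = norm k v.
Proof. rewrite norm_scal. replace (Rabs (-1)) with 1. ring. rewrite Rabs_left; lra. Qed.

Lemma norm_sub_triangle k u v : norm k u - norm k v <= norm k (vadd u v).
Proof.
  assert (E : u = vadd (vadd u v) (vscal (-1) v)).
  { apply functional_extensionality; intros i; unfold vadd, vscal; ring. }
  pose proof (norm_triangle k (vadd u v) (vscal (-1) v)). rewrite <- E, norm_opp in H. lra.
Qed.

Lemma nsq_eq_norm k v : sqrt (nsq k v) = norm k v.
Proof. reflexivity. Qed.

Lemma normX_sq n m p : normX n m p ^ 2 = nsq n (fst p) + nsq m (snd p).
Proof. unfold normX. rewrite pow2_sqrt; auto. pose proof (nsq_nonneg n (fst p)); pose proof (nsq_nonneg m (snd p)); unfold nsq in *; lra. Qed.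

Lemma normX_nonneg n m p : 0 <= normX n m p.
Proof. apply sqrt_pos. Qed.

Lemma norm_fst_le n m p : norm n (fst p) <= normX n m p.
Proof. unfold norm, normX. apply sqrt_le_1_alt. pose proof (nsq_nonneg m (snd p)); unfold nsq in *; lra. Qed.
Lemma norm_snd_le n m p : norm m (snd p) <= normX n m p.
Proof. unfold norm, normX. apply sqrt_le_1_alt. pose proof (nsq_nonneg n (fst p)); unfold nsq in *; lra. Qed.

Definition ext (y : R -> R) (d : R) (s : R) : R :=
  if Rle_dec 0 s then y s else y 0 + d * s.

Lemma dn_to_lim y t d : 0 <= t -> deriv_nonneg y t d -> derivable_pt_lim (ext y d) t d.
Proof.
  intros Ht H eps Heps. destruct (H eps Heps) as [del [Hdel Hs]].
  destruct (Req_dec t 0) as [E|E].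
  - subst t. exists (mkposreal del Hdel). intros h Hh Hlt. simpl in Hlt.
    unfold ext. destruct (Rle_dec 0 (0 + h)); destruct (Rle_dec 0 0); try lra.
    + replace (0+h) with h in * by ring. pose proof (Hs h r Hh). rewrite !Rminus_0_r in H0. auto.
    + replace ((y 0 + d * (0 + h) - y 0) / h - d) with 0 by (field; auto). rewrite Rabs_R0; lra.
  - assert (Hm : 0 < Rmin del t) by (apply Rmin_pos; lra).
    exists (mkposreal _ Hm). intros h Hh Hlt. simpl in Hlt.
    pose proof (Rmin_l del t); pose proof (Rmin_r del t).
    assert (Habs: Rabs h < del /\ Rabs h < t) by lra. destruct Habs as [Ha1 Ha2].
    pose proof (Rle_abs (-h)). rewrite Rabs_Ropp in *.
    unfold ext. destruct (Rle_dec 0 (t + h)); destruct (Rle_dec 0 t); try lra.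
    replace h with ((t+h) - t) at 2 by ring. apply Hs; auto; try lra. replace (t + h - t) with h by ring; auto.
Qed.

Lemma lim_to_dn g y t d : 0 <= t -> derivable_pt_lim g t d -> (forall s, 0 <= s -> g s = y s) -> deriv_nonneg y t d.
Proof.
  intros Ht H Hg eps Heps. destruct (H eps Heps) as [del Hdel].
  exists del. split. apply cond_pos. intros s Hs Hne Hlt.
  assert (s - t <> 0) by lra. specialize (Hdel (s - t) H0 Hlt).
  replace (t + (s - t)) with s in Hdel by ring. rewrite <- !Hg; auto.
Qed.

Lemma ext_eq y d s : 0 <= s -> ext y d s = y s.
Proof. intros. unfold ext. destruct (Rle_dec 0 s); auto; lra. Qed.

Lemma dn_plus y1 y2 t d1 d2 : 0 <= t -> deriv_nonneg y1 t d1 -> deriv_nonneg y2 t d2 ->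
  deriv_nonneg (fun s => y1 s + y2 s) t (d1 + d2).
Proof. intros Ht H1 H2. apply (lim_to_dn (fun s => ext y1 d1 s + ext y2 d2 s)); auto.
  apply derivable_pt_lim_plus; apply dn_to_lim; auto. intros; rewrite !ext_eq; auto. Qed.

Lemma dn_minus y1 y2 t d1 d2 : 0 <= t -> deriv_nonneg y1 t d1 -> deriv_nonneg y2 t d2 ->
  deriv_nonneg (fun s => y1 s - y2 s) t (d1 - d2).
Proof. intros Ht H1 H2. apply (lim_to_dn (fun s => ext y1 d1 s - ext y2 d2 s)); auto.
  apply derivable_pt_lim_minus; apply dn_to_lim; auto. intros; rewrite !ext_eq; auto. Qed.

Lemma dn_mult y1 y2 t d1 d2 : 0 <= t -> deriv_nonneg y1 t d1 -> deriv_nonneg y2 t d2 ->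
  deriv_nonneg (fun s => y1 s * y2 s) t (d1 * y2 t + y1 t * d2).
Proof. intros Ht H1 H2. apply (lim_to_dn (fun s => ext y1 d1 s * ext y2 d2 s)); auto.
  rewrite <- (ext_eq y2 d2 t), <- (ext_eq y1 d1 t) by auto.
  apply (derivable_pt_lim_mult (ext y1 d1) (ext y2 d2)); apply dn_to_lim; auto.
  intros; rewrite !ext_eq; auto. Qed.

Lemma dn_const c t : 0 <= t -> deriv_nonneg (fun _ => c) t 0.
Proof. intros Ht. apply (lim_to_dn (fun _ => c)); auto. apply derivable_pt_lim_const. Qed.

Lemma dn_id t : 0 <= t -> deriv_nonneg (fun s => s) t 1.
Proof. intros Ht. apply (lim_to_dn (fun s => s)); auto. apply derivable_pt_lim_id. Qed.

Lemma dn_scal c y t d : 0 <= t -> deriv_nonneg y t d -> deriv_nonneg (fun s => c * y s) t (c * d).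
Proof. intros Ht H. apply (lim_to_dn (fun s => c * ext y d s)); auto.
  apply derivable_pt_lim_scal. apply dn_to_lim; auto. intros; rewrite ext_eq; auto. Qed.

Lemma dn_exp c t : 0 <= t -> deriv_nonneg (fun s => exp (c * s)) t (c * exp (c * t)).
Proof. intros Ht. apply (lim_to_dn (fun s => exp (c * s))); auto.
  replace (c * exp (c * t)) with (exp (c * t) * (c * 1)) by ring.
  apply (derivable_pt_lim_comp (fun s => c * s) exp). apply derivable_pt_lim_scal, derivable_pt_lim_id.
  apply derivable_pt_lim_exp. Qed.

Lemma dn_ext y1 y2 t d1 d2 : (forall s, 0 <= s -> y1 s = y2 s) -> d1 = d2 -> 0 <= t ->
  deriv_nonneg y1 t d1 -> deriv_nonneg y2 t d2.
Proof. intros E Ed Ht H eps Heps. destruct (H eps Heps) as [del [Hd Hs]]. exists del; split; auto.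
  intros s Hs0 Hne Hlt. rewrite <- !E, <- Ed; auto. Qed.

Lemma dn_sumR k (F : R -> nat -> R) (dF : nat -> R) t : 0 <= t ->
  (forall i, (i < k)%nat -> deriv_nonneg (fun s => F s i) t (dF i)) ->
  deriv_nonneg (fun s => sumR k (F s)) t (sumR k dF).
Proof. intros Ht. induction k; intros H; simpl.
  - apply dn_const; auto.
  - apply dn_plus; [auto| apply IHk; intros; apply H; lia | apply H; lia]. Qed.

Lemma dn_shift y t d s0 : 0 <= s0 -> 0 <= t -> deriv_nonneg y (s0 + t) d -> deriv_nonneg (fun s => y (s0 + s)) t d.
Proof. intros H0 Ht H eps Heps. destruct (H eps Heps) as [del [Hd Hs]]. exists del; split; auto.
  intros s Hs0 Hne Hlt. replace (s - t) with ((s0 + s) - (s0 + t)) by ring. apply Hs; try lra.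
  replace (s0 + s - (s0 + t)) with (s - t) by ring; auto. Qed.

Lemma dn_cont y t d : 0 <= t -> deriv_nonneg y t d -> forall eps, 0 < eps -> exists del, 0 < del /\
  forall s, 0 <= s -> Rabs (s - t) < del -> Rabs (y s - y t) < eps.
Proof.
  intros Ht H eps Heps. destruct (H 1 Rlt_0_1) as [del [Hd Hs]].
  assert (Hp : 0 < Rabs d + 1) by (pose proof (Rabs_pos d); lra).
  exists (Rmin del (eps / (Rabs d + 1))). split. apply Rmin_pos; auto. apply Rdiv_lt_0_compat; lra.
  intros s Hs0 Hlt. pose proof (Rmin_l del (eps / (Rabs d + 1))). pose proof (Rmin_r del (eps / (Rabs d + 1))).
  destruct (Req_dec s t) as [->|Hne]. rewrite Rminus_diag, Rabs_R0; auto.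
  specialize (Hs s Hs0 Hne ltac:(lra)).
  assert (Hq : Rabs ((y s - y t) / (s - t)) < Rabs d + 1).
  { pose proof (Rabs_triang ((y s - y t) / (s - t) - d) d). replace ((y s - y t) / (s - t) - d + d) with ((y s - y t) / (s - t)) in H2 by ring. lra. }
  replace (y s - y t) with ((y s - y t) / (s - t) * (s - t)) by (field; lra).
  rewrite Rabs_mult. 
  assert (Rabs (s - t) < eps / (Rabs d + 1)) by lra.
  apply Rle_lt_trans with ((Rabs d + 1) * Rabs (s - t)).
  apply Rmult_le_compat_r. apply Rabs_pos. lra.
  apply Rmult_lt_reg_l with (/ (Rabs d + 1)). apply Rinv_0_lt_compat; lra.
  replace (/ (Rabs d + 1) * ((Rabs d + 1) * Rabs (s - t))) with (Rabs (s - t)) by (field; lra).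
  replace (/ (Rabs d + 1) * eps) with (eps / (Rabs d + 1)) by (field; lra). auto.
Qed.

Lemma first_zero (T : R) (y1 y2 d1 d2 : R -> R) :
  0 <= T ->
  (forall t, 0 <= t <= T -> deriv_nonneg y1 t (d1 t) /\ deriv_nonneg y2 t (d2 t)) ->
  0 < y1 0 -> 0 < y2 0 ->
  (forall t, 0 < t <= T -> (forall s, 0 <= s < t -> 0 < y1 s /\ 0 < y2 s) ->
     0 <= y1 t -> 0 <= y2 t -> (y1 t = 0 -> 0 < d1 t) /\ (y2 t = 0 -> 0 < d2 t)) ->
  forall t, 0 <= t <= T -> 0 < y1 t /\ 0 < y2 t.
Proof.
  intros HT Hd H10 H20 Hz.
  set (E := fun s => 0 <= s <= T /\ forall u, 0 <= u <= s -> 0 < y1 u /\ 0 < y2 u).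
  assert (E0 : E 0). { split. lra. intros u Hu. replace u with 0 by lra. auto. }
  assert (Hb : bound E). { exists T. intros s [Hs _]. lra. }
  destruct (completeness E Hb (ex_intro _ 0 E0)) as [c [Hub Hlub]].
  assert (Hc0 : 0 <= c) by (apply Hub; auto).
  assert (HcT : c <= T) by (apply Hlub; intros s [Hs _]; lra).
  assert (Cl1 : forall u, 0 <= u < c -> 0 < y1 u /\ 0 < y2 u).
  { intros u Hu. apply NNPP; intros Hn.
    assert (c <= u); [|lra]. apply Hlub. intros s Es. destruct (Rle_lt_dec s u); auto.
    exfalso. apply Hn. destruct Es as [_ Es]. apply Es; lra. }
  destruct (Hd c (conj Hc0 HcT)) as [D1 D2].
  pose proof (dn_cont _ _ _ Hc0 D1) as C1. pose proof (dn_cont _ _ _ Hc0 D2) as C2.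
  assert (Nn : forall y, (forall eps, 0 < eps -> exists del, 0 < del /\ forall s, 0 <= s -> Rabs (s - c) < del -> Rabs (y s - y c) < eps) ->
             0 < y 0 -> (forall u, 0 <= u < c -> 0 < y u) -> 0 <= y c).
  { intros y Cy Hy0 Hyu. destruct (Rle_dec 0 (y c)) as [|Hn]; auto. exfalso.
    apply Rnot_le_lt in Hn.
    destruct (Req_dec c 0) as [Ez|Ez]. rewrite Ez in Hn. lra.
    destruct (Cy (- y c)) as [del [Hdel Hs]]; [lra|].
    set (s := c - Rmin del c / 2). pose proof (Rmin_l del c); pose proof (Rmin_r del c).
    assert (0 < Rmin del c) by (apply Rmin_pos; lra).
    assert (Hsc : Rabs (s - c) < del) by (rewrite Rabs_left; unfold s; lra).
    assert (Hs0 : 0 <= s) by (unfold s; lra).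
    specialize (Hs s Hs0 Hsc).
    specialize (Hyu s ltac:(unfold s; lra)). apply Rabs_def2 in Hs. lra. }
  assert (N1 : 0 <= y1 c) by (apply Nn; auto; intros; apply Cl1; auto).
  assert (N2 : 0 <= y2 c) by (apply Nn; auto; intros; apply Cl1; auto).
  destruct (Rlt_dec 0 (y1 c)) as [P1|P1]; destruct (Rlt_dec 0 (y2 c)) as [P2|P2].
  -
    destruct (C1 (y1 c) P1) as [e1 [He1 Hs1]]. destruct (C2 (y2 c) P2) as [e2 [He2 Hs2]].
    assert (Hpos : forall u, 0 <= u <= c -> 0 < y1 u /\ 0 < y2 u).
    { intros u Hu. destruct (Req_dec u c) as [->|]; auto. apply Cl1; lra. }
    destruct (Req_dec c T) as [EcT|NcT].
    + intros t Ht. apply Hpos. lra.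
    + exfalso. set (s := Rmin T (c + Rmin e1 e2 / 2)).
      assert (0 < Rmin e1 e2) by (apply Rmin_pos; lra).
      pose proof (Rmin_l e1 e2); pose proof (Rmin_r e1 e2).
      pose proof (Rmin_l T (c + Rmin e1 e2 / 2)); pose proof (Rmin_r T (c + Rmin e1 e2 / 2)).
      assert (c < s). { unfold s. apply Rmin_glb_lt; lra. }
      assert (E s).
      { unfold s in *. split. lra. intros u Hu. destruct (Rle_dec u c). apply Hpos; lra.
        specialize (Hs1 u ltac:(lra) ltac:(rewrite Rabs_right; lra)).
        specialize (Hs2 u ltac:(lra) ltac:(rewrite Rabs_right; lra)).
        apply Rabs_def2 in Hs1. apply Rabs_def2 in Hs2. lra. }
      match goal with HH : E s |- _ => specialize (Hub s HH) end. lra.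
  - exfalso. assert (Z : y2 c = 0) by lra.
    assert (Hc : 0 < c). { destruct (Req_dec c 0) as [Ez|Ez]; [rewrite Ez in Z; lra | lra]. }
    destruct (Hz c (conj Hc HcT) Cl1 N1 N2) as [_ HH]. specialize (HH Z).
    destruct (D2 (d2 c / 2) ltac:(lra)) as [del [Hdel Hs]].
    set (s := c - Rmin del c / 2). pose proof (Rmin_l del c); pose proof (Rmin_r del c).
    assert (0 < Rmin del c) by (apply Rmin_pos; lra).
    specialize (Hs s ltac:(unfold s; lra) ltac:(unfold s; lra) ltac:(rewrite Rabs_left; unfold s; lra)).
    specialize (Cl1 s ltac:(unfold s; lra)). rewrite Z in Hs. apply Rabs_def2 in Hs.
    assert (0 < (y2 s - 0) / (s - c)) by lra.
    assert (s - c < 0) by (unfold s; lra).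
    assert (Hq : (y2 s - 0) / (s - c) * (s - c) = y2 s) by (field; lra). nra.
  - exfalso. assert (Z : y1 c = 0) by lra.
    assert (Hc : 0 < c). { destruct (Req_dec c 0) as [Ez|Ez]; [rewrite Ez in Z; lra | lra]. }
    destruct (Hz c (conj Hc HcT) Cl1 N1 N2) as [HH _]. specialize (HH Z).
    destruct (D1 (d1 c / 2) ltac:(lra)) as [del [Hdel Hs]].
    set (s := c - Rmin del c / 2). pose proof (Rmin_l del c); pose proof (Rmin_r del c).
    assert (0 < Rmin del c) by (apply Rmin_pos; lra).
    specialize (Hs s ltac:(unfold s; lra) ltac:(unfold s; lra) ltac:(rewrite Rabs_left; unfold s; lra)).
    specialize (Cl1 s ltac:(unfold s; lra)). rewrite Z in Hs. apply Rabs_def2 in Hs.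
    assert (0 < (y1 s - 0) / (s - c)) by lra.
    assert (s - c < 0) by (unfold s; lra).
    assert (Hq : (y1 s - 0) / (s - c) * (s - c) = y1 s) by (field; lra). nra.
  - exfalso. assert (Z : y1 c = 0) by lra.
    assert (Hc : 0 < c). { destruct (Req_dec c 0) as [Ez|Ez]; [rewrite Ez in Z; lra | lra]. }
    destruct (Hz c (conj Hc HcT) Cl1 N1 N2) as [HH _]. specialize (HH Z).
    destruct (D1 (d1 c / 2) ltac:(lra)) as [del [Hdel Hs]].
    set (s := c - Rmin del c / 2). pose proof (Rmin_l del c); pose proof (Rmin_r del c).
    assert (0 < Rmin del c) by (apply Rmin_pos; lra).
    specialize (Hs s ltac:(unfold s; lra) ltac:(unfold s; lra) ltac:(rewrite Rabs_left; unfold s; lra)).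
    specialize (Cl1 s ltac:(unfold s; lra)). rewrite Z in Hs. apply Rabs_def2 in Hs.
    assert (0 < (y1 s - 0) / (s - c)) by lra.
    assert (s - c < 0) by (unfold s; lra).
    assert (Hq : (y1 s - 0) / (s - c) * (s - c) = y1 s) by (field; lra). nra.
Qed.

Lemma unif_bound (T : R) (P : R -> R -> Prop) :
  0 <= T -> (forall t K K', P t K -> K <= K' -> P t K') ->
  (forall t0, 0 <= t0 <= T -> exists eta, 0 < eta /\ exists K, forall t, 0 <= t <= T -> Rabs (t - t0) < eta -> P t K) ->
  exists K, forall t, 0 <= t <= T -> P t K.
Proof.
  intros HT Hmon Hloc.
  set (E := fun s => 0 <= s <= T /\ exists K, forall u, 0 <= u <= s -> P u K).
  assert (E0 : E 0).
  { split. lra. destruct (Hloc 0 ltac:(lra)) as [eta [He [K HK]]]. exists K. intros u Hu.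
    apply HK. lra. replace (u - 0) with 0 by lra. rewrite Rabs_R0; auto. }
  assert (Hb : bound E). { exists T. intros s [Hs _]. lra. }
  destruct (completeness E Hb (ex_intro _ 0 E0)) as [c [Hub Hlub]].
  assert (Hc0 : 0 <= c) by (apply Hub; auto).
  assert (HcT : c <= T) by (apply Hlub; intros s [Hs _]; lra).
  destruct (Hloc c (conj Hc0 HcT)) as [eta [He [Kc HKc]]].
  assert (Hs : exists s, E s /\ c - eta < s).
  { apply NNPP; intros Hn. assert (c <= c - eta); [|lra]. apply Hlub. intros s Es.
    destruct (Rle_lt_dec s (c - eta)); auto. exfalso; apply Hn; exists s; auto. }
  destruct Hs as [s [[Hs0 [Ks HKs]] Hsc]].
  assert (Hsc' : s <= c) by (apply Hub; split; auto; exists Ks; auto).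
  set (s' := Rmin T (c + eta / 2)).
  assert (HE : forall u, 0 <= u <= s' -> P u (Rmax Ks Kc)).
  { intros u Hu. pose proof (Rmin_l T (c + eta / 2)); pose proof (Rmin_r T (c + eta / 2)).
    destruct (Rle_dec u s).
    - apply Hmon with Ks. apply HKs; lra. apply Rmax_l.
    - apply Hmon with Kc. apply HKc. unfold s' in *; lra. apply Rabs_def1; unfold s' in *; lra. apply Rmax_r. }
  exists (Rmax Ks Kc). destruct (Req_dec s' T) as [E1|E1].
  - intros t Ht. apply HE. lra.
  - exfalso. assert (s' = c + eta / 2).
    { unfold s'. unfold Rmin. destruct (Rle_dec T (c + eta / 2)); auto. unfold s' in E1. unfold Rmin in E1.
      destruct (Rle_dec T (c + eta / 2)); tauto. }
    assert (E s'). { split. pose proof (Rmin_l T (c + eta / 2)). unfold s' in *; lra. exists (Rmax Ks Kc); auto. }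
    specialize (Hub s' H0). lra.
Qed.

Definition linmap n m k (L : pt -> vec) : Prop :=
  (forall h, inX n m h -> supp k (L h)) /\
  (forall h1 h2, inX n m h1 -> inX n m h2 -> L (padd h1 h2) = vadd (L h1) (L h2)) /\
  (forall c h, inX n m h -> L (pscal c h) = vscal c (L h)).

Definition LinSys n m (A B : R -> pt -> vec) : Prop :=
  (forall t, 0 <= t -> linmap n m n (A t) /\ linmap n m m (B t)) /\
  (exists c1, 0 < c1 /\ forall t, 0 <= t -> exists al l r1 r2,
     0 <= l /\ 0 <= r1 /\ 0 <= r2 /\ al >= l + r1 + r2 + c1 /\
     (forall a, supp n a -> dot n a (A t (a, vzero)) >= al * nsq n a) /\
     (forall z, supp m z -> dot m z (B t (vzero, z)) <= l * nsq m z) /\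
     (forall z, supp m z -> norm n (A t (vzero, z)) <= r1 * norm m z) /\
     (forall a, supp n a -> norm m (B t (a, vzero)) <= r2 * norm n a)) /\
  (forall T, 0 <= T -> exists K, 0 < K /\ forall t, 0 <= t <= T -> forall h, inX n m h ->
     norm n (A t h) <= K * normX n m h /\ norm m (B t h) <= K * normX n m h).

Definition sol n m (A B : R -> pt -> vec) (w : R -> pt) : Prop :=
  forall t, 0 <= t -> inX n m (w t) /\
   (forall i, (i < n)%nat -> deriv_nonneg (fun s => fst (w s) i) t (A t (w t) i)) /\
   (forall i, (i < m)%nat -> deriv_nonneg (fun s => snd (w s) i) t (B t (w t) i)).

Lemma supp_vadd k u v : supp k u -> supp k v -> supp k (vadd u v).
Proof. intros H1 H2 i Hi. unfold vadd. rewrite H1, H2; auto; ring. Qed.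
Lemma supp_vsub k u v : supp k u -> supp k v -> supp k (vsub u v).
Proof. intros H1 H2 i Hi. unfold vsub. rewrite H1, H2; auto; ring. Qed.
Lemma supp_vscal k c u : supp k u -> supp k (vscal c u).
Proof. intros H1 i Hi. unfold vscal. rewrite H1; auto; ring. Qed.
Lemma supp_vzero k : supp k vzero.
Proof. intros i _. reflexivity. Qed.
Lemma inX_padd n m p q : inX n m p -> inX n m q -> inX n m (padd p q).
Proof. intros [] []; split; simpl; apply supp_vadd; auto. Qed.
Lemma inX_psub n m p q : inX n m p -> inX n m q -> inX n m (psub p q).
Proof. intros [] []; split; simpl; apply supp_vsub; auto. Qed.
Lemma inX_pscal n m c p : inX n m p -> inX n m (pscal c p).
Proof. intros []; split; simpl; apply supp_vscal; auto. Qed.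
Lemma inX_pair n m a z : supp n a -> supp m z -> inX n m (a, z).
Proof. intros; split; auto. Qed.

Lemma vsub_as u v : vsub u v = vadd u (vscal (-1) v).
Proof. apply functional_extensionality; intros; unfold vsub, vadd, vscal; ring. Qed.
Lemma psub_as p q : psub p q = padd p (pscal (-1) q).
Proof. unfold psub, padd, pscal; simpl. rewrite !vsub_as. reflexivity. Qed.

Lemma linmap_sub n m k L p q : linmap n m k L -> inX n m p -> inX n m q -> L (psub p q) = vsub (L p) (L q).
Proof. intros [H1 [H2 H3]] Hp Hq. rewrite psub_as, H2, H3; auto. rewrite vsub_as; auto.
  apply inX_pscal; auto. Qed.

Lemma pair_split p : p = padd (fst p, vzero) (vzero, snd p).
Proof. destruct p as [a z]. unfold padd; simpl. f_equal; apply functional_extensionality; intros; unfold vadd, vzero; ring. Qed.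

Lemma linmap_split n m k L p : linmap n m k L -> inX n m p -> L p = vadd (L (fst p, vzero)) (L (vzero, snd p)).
Proof. intros [H1 [H2 H3]] [Ha Hz]. rewrite (pair_split p) at 1. apply H2; split; simpl; auto; apply supp_vzero. Qed.

Lemma linmap_zero n m k L : linmap n m k L -> forall i, L pzero i = 0.
Proof. intros [H1 [H2 H3]] i. assert (pzero = pscal 0 pzero).
  { unfold pscal, pzero; simpl; f_equal; apply functional_extensionality; intros; unfold vscal, vzero; ring. }
  rewrite H, H3. unfold vscal; ring. split; apply supp_vzero. Qed.

Lemma sol_sub n m A B w1 w2 : (forall t, 0 <= t -> linmap n m n (A t) /\ linmap n m m (B t)) ->
  sol n m A B w1 -> sol n m A B w2 -> sol n m A B (fun t => psub (w1 t) (w2 t)).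
Proof.
  intros HL H1 H2 t Ht. destruct (H1 t Ht) as [X1 [D1 E1]]. destruct (H2 t Ht) as [X2 [D2 E2]].
  destruct (HL t Ht) as [LA LB]. split. apply inX_psub; auto. split.
  - intros i Hi. rewrite (linmap_sub _ _ _ _ _ _ LA X1 X2). apply (dn_minus _ _ _ _ _ Ht (D1 i Hi) (D2 i Hi)).
  - intros i Hi. rewrite (linmap_sub _ _ _ _ _ _ LB X1 X2). apply (dn_minus _ _ _ _ _ Ht (E1 i Hi) (E2 i Hi)).
Qed.

Lemma sol_add n m A B w1 w2 : (forall t, 0 <= t -> linmap n m n (A t) /\ linmap n m m (B t)) ->
  sol n m A B w1 -> sol n m A B w2 -> sol n m A B (fun t => padd (w1 t) (w2 t)).
Proof.
  intros HL H1 H2 t Ht. destruct (H1 t Ht) as [X1 [D1 E1]]. destruct (H2 t Ht) as [X2 [D2 E2]].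
  destruct (HL t Ht) as [[_ [LA _]] [_ [LB _]]]. split. apply inX_padd; auto. split.
  - intros i Hi. rewrite LA by auto. apply (dn_plus _ _ _ _ _ Ht (D1 i Hi) (D2 i Hi)).
  - intros i Hi. rewrite LB by auto. apply (dn_plus _ _ _ _ _ Ht (E1 i Hi) (E2 i Hi)).
Qed.

Lemma sol_scal n m A B c w : (forall t, 0 <= t -> linmap n m n (A t) /\ linmap n m m (B t)) ->
  sol n m A B w -> sol n m A B (fun t => pscal c (w t)).
Proof.
  intros HL H1 t Ht. destruct (H1 t Ht) as [X1 [D1 E1]].
  destruct (HL t Ht) as [[_ [_ LA]] [_ [_ LB]]]. split. apply inX_pscal; auto. split.
  - intros i Hi. rewrite LA by auto. apply (dn_scal _ _ _ _ Ht (D1 i Hi)).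
  - intros i Hi. rewrite LB by auto. apply (dn_scal _ _ _ _ Ht (E1 i Hi)).
Qed.

Lemma dn_nsq k (v : R -> vec) (dv : nat -> R) t : 0 <= t ->
  (forall i, (i < k)%nat -> deriv_nonneg (fun s => v s i) t (dv i)) ->
  deriv_nonneg (fun s => nsq k (v s)) t (2 * dot k (v t) dv).
Proof.
  intros Ht H. unfold nsq, dot.
  apply dn_ext with (y1 := fun s => sumR k (fun i => v s i * v s i))
    (d1 := sumR k (fun i => dv i * v t i + v t i * dv i)); auto.
  rewrite <- sumR_scal. apply sumR_ext; intros; ring.
  apply dn_sumR; auto. intros i Hi. apply (dn_mult (fun s => v s i) (fun s => v s i)); auto.
Qed.

Lemma dn_nsq_fst n m A B w t : 0 <= t -> sol n m A B w ->
  deriv_nonneg (fun s => nsq n (fst (w s))) t (2 * dot n (fst (w t)) (A t (w t))).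
Proof. intros Ht H. destruct (H t Ht) as [_ [D _]]. apply (dn_nsq n (fun s => fst (w s))); auto. Qed.

Lemma dn_nsq_snd n m A B w t : 0 <= t -> sol n m A B w ->
  deriv_nonneg (fun s => nsq m (snd (w s))) t (2 * dot m (snd (w t)) (B t (w t))).
Proof. intros Ht H. destruct (H t Ht) as [_ [_ D]]. apply (dn_nsq m (fun s => snd (w s))); auto. Qed.

Lemma norm_le_nsq k j u v : nsq j v <= nsq k u -> norm j v <= norm k u.
Proof. intros H. unfold norm. apply sqrt_le_1_alt. exact H. Qed.

Lemma normprod_le k j u v : nsq j v <= nsq k u -> norm k u * norm j v <= nsq k u.
Proof. intros H. pose proof (norm_le_nsq k j u v H). pose proof (norm_nonneg k u); pose proof (norm_nonneg j v).
  rewrite <- norm_sq'. nra. Qed.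

Lemma cone_at n m A B : LinSys n m A B -> exists c1, 0 < c1 /\ forall t, 0 <= t -> exists al l r1 r2,
  al >= l + r1 + r2 + c1 /\ 0 <= l /\ 0 <= r1 /\ 0 <= r2 /\
  (forall a z, supp n a -> supp m z -> nsq m z <= nsq n a -> dot n a (A t (a, z)) >= (al - r1) * nsq n a) /\
  (forall a z, supp n a -> supp m z -> dot m z (B t (a, z)) <= l * nsq m z + r2 * (norm n a * norm m z)).
Proof.
  intros [HL [[c1 [Hc1 HC]] _]]. exists c1. split; auto. intros t Ht.
  destruct (HC t Ht) as [al [l [r1 [r2 [Hl [Hr1 [Hr2 [Hal [HA [HB [HAz HBa]]]]]]]]]]].
  exists al, l, r1, r2. repeat split; auto.
  - intros a z Ha Hz Hle. destruct (HL t Ht) as [LA _].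
    rewrite (linmap_split _ _ _ _ _ LA (inX_pair _ _ _ _ Ha Hz)). simpl. rewrite dot_add_r.
    pose proof (HA a Ha). pose proof (CS_ge n a (A t (vzero, z))). pose proof (HAz z Hz).
    pose proof (normprod_le n m a z Hle). pose proof (norm_nonneg n a).
    assert (norm n a * norm n (A t (vzero, z)) <= norm n a * (r1 * norm m z)) by (apply Rmult_le_compat_l; auto).
    nra.
  - intros a z Ha Hz. destruct (HL t Ht) as [_ LB].
    rewrite (linmap_split _ _ _ _ _ LB (inX_pair _ _ _ _ Ha Hz)). simpl. rewrite dot_add_r.
    pose proof (HB z Hz). pose proof (CS_l m z (B t (a, vzero))). pose proof (HBa a Ha).
    pose proof (norm_nonneg m z).
    assert (norm m z * norm m (B t (a, vzero)) <= norm m z * (r2 * norm n a)) by (apply Rmult_le_compat_l; auto).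
    nra.
Qed.

Definition hL n m (p : pt) := nsq n (fst p) - nsq m (snd p).
Definition yN n m (p : pt) := nsq n (fst p) + nsq m (snd p).

Lemma sol_inX n m A B w t : sol n m A B w -> 0 <= t -> inX n m (w t).
Proof. intros H Ht. apply (H t Ht). Qed.

Lemma gron_up (T K : R) (y dy : R -> R) : 0 <= T -> 0 < K -> 0 <= y 0 ->
  (forall t, 0 <= t <= T -> deriv_nonneg y t (dy t) /\ dy t <= 4 * K * y t) ->
  forall t, 0 <= t <= T -> y t <= y 0 * exp (5 * K * t).
Proof.
  intros HT HK Hy0 H t Ht. apply Rnot_lt_le. intros Hlt.
  set (eta := (y t - y 0 * exp (5 * K * t)) / exp (5 * K * t)).
  assert (He : 0 < exp (5 * K * t)) by apply exp_pos.
  assert (Heta : 0 < eta) by (unfold eta; apply Rdiv_lt_0_compat; lra).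
  assert (Hyt : y t = (y 0 + eta) * exp (5 * K * t)) by (unfold eta; field; lra).
  pose proof (first_zero T (fun s => (y 0 + eta) * exp (5 * K * s) - y s) (fun _ => 1)
     (fun s => (y 0 + eta) * (5 * K * exp (5 * K * s)) - dy s) (fun _ => 0) HT) as FZ.
  assert (Hp : 0 < (y 0 + eta) * exp (5 * K * t) - y t /\ 0 < 1); [| lra].
  apply FZ; [ | | | | exact Ht].
  - intros s Hs. split.
    { apply dn_minus. lra. apply dn_scal. lra. apply dn_exp; lra. apply H; lra. }
    apply dn_const; lra.
  - replace (5 * K * 0) with 0 by ring. rewrite exp_0. lra.
  - lra.
  - intros s Hs _ _ _. split; [|lra]. intros Z. cbv beta in *. destruct (H s ltac:(lra)) as [_ Hd].
    pose proof (exp_pos (5 * K * s)). set (E := exp (5 * K * s)) in *.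
    assert (P : 0 < (y 0 + eta) * E) by (apply Rmult_lt_0_compat; lra).
    assert (Hm : (y 0 + eta) * (5 * K * E) = 5 * K * ((y 0 + eta) * E)) by ring.
    assert (0 < K * y s) by (apply Rmult_lt_0_compat; lra).
    assert (K * ((y 0 + eta) * E) = K * y s) by (f_equal; lra). lra.
Qed.

Lemma gron_low (T K : R) (y dy : R -> R) : 0 <= T -> 0 < K -> 0 < y 0 ->
  (forall t, 0 <= t <= T -> deriv_nonneg y t (dy t) /\ - (4 * K * y t) <= dy t) ->
  forall t, 0 <= t <= T -> deriv_nonneg (fun s => y s - y 0 / 2 * exp (-8 * K * s)) t (dy t - y 0 / 2 * (-8 * K * exp (-8 * K * t))) /\
   (y t - y 0 / 2 * exp (-8 * K * t) = 0 -> 0 < dy t - y 0 / 2 * (-8 * K * exp (-8 * K * t))).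
Proof.
  intros HT HK Hy0 H t Ht. destruct (H t Ht) as [Hd Hb]. split.
  - apply dn_minus. lra. auto. apply dn_scal. lra. apply dn_exp; lra.
  - intros Z. pose proof (exp_pos (-8 * K * t)). set (E := exp (-8 * K * t)) in *.
    assert (P : 0 < y 0 * E) by (apply Rmult_lt_0_compat; lra).
    assert (0 < K * (y 0 * E)) by (apply Rmult_lt_0_compat; lra).
    assert (Hyt : y t = y 0 / 2 * E) by lra.
    assert (Hm : K * y t = K * (y 0 * E) / 2) by (rewrite Hyt; field).
    assert (Hm2 : y 0 / 2 * (-8 * K * E) = - 4 * (K * (y 0 * E))) by field. lra.
Qed.

Lemma yN_nonneg n m p : 0 <= yN n m p.
Proof. unfold yN. pose proof (nsq_nonneg n (fst p)); pose proof (nsq_nonneg m (snd p)); lra. Qed.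

Lemma normX_sq' n m p : normX n m p * normX n m p = yN n m p.
Proof. unfold yN. rewrite <- normX_sq. ring. Qed.

Definition dyN n m (A B : R -> pt -> vec) w t :=
  2 * dot n (fst (w t)) (A t (w t)) + 2 * dot m (snd (w t)) (B t (w t)).

Lemma dn_yN n m A B w t : 0 <= t -> sol n m A B w ->
  deriv_nonneg (fun s => yN n m (w s)) t (dyN n m A B w t).
Proof. intros Ht H. unfold yN, dyN. apply dn_plus; auto. apply (dn_nsq_fst n m A B); auto. apply (dn_nsq_snd n m A B); auto. Qed.

Definition dhL n m (A B : R -> pt -> vec) w t :=
  2 * dot n (fst (w t)) (A t (w t)) - 2 * dot m (snd (w t)) (B t (w t)).

Lemma dn_hL n m A B w t : 0 <= t -> sol n m A B w ->
  deriv_nonneg (fun s => hL n m (w s)) t (dhL n m A B w t).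
Proof. intros Ht H. unfold hL, dhL. apply dn_minus; auto. apply (dn_nsq_fst n m A B); auto. apply (dn_nsq_snd n m A B); auto. Qed.

Lemma sol_dboundU n m A B : LinSys n m A B -> forall T, 0 <= T -> exists K, 0 < K /\ forall w, sol n m A B w ->
  forall t, 0 <= t <= T -> Rabs (dyN n m A B w t) <= 4 * K * yN n m (w t).
Proof.
  intros [_ [_ HB]] T HT. destruct (HB T HT) as [K [HK Hb]]. exists K; split; auto.
  intros w Hs t Ht. destruct (Hs t ltac:(lra)) as [X _]. destruct (Hb t Ht (w t) X) as [B1 B2].
  pose proof (CS n (fst (w t)) (A t (w t))). pose proof (CS m (snd (w t)) (B t (w t))).
  pose proof (norm_fst_le n m (w t)). pose proof (norm_snd_le n m (w t)).
  pose proof (normX_sq' n m (w t)). pose proof (normX_nonneg n m (w t)).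
  pose proof (norm_nonneg n (fst (w t))); pose proof (norm_nonneg m (snd (w t))).
  pose proof (norm_nonneg n (A t (w t))); pose proof (norm_nonneg m (B t (w t))).
  set (X1 := normX n m (w t)) in *.
  assert (norm n (fst (w t)) * norm n (A t (w t)) <= K * yN n m (w t)).
  { rewrite <- H3. apply Rle_trans with (X1 * (K * X1)). apply Rmult_le_compat; auto. nra. }
  assert (norm m (snd (w t)) * norm m (B t (w t)) <= K * yN n m (w t)).
  { rewrite <- H3. apply Rle_trans with (X1 * (K * X1)). apply Rmult_le_compat; auto. nra. }
  unfold dyN. eapply Rle_trans. apply Rabs_triang. rewrite !Rabs_mult. rewrite Rabs_right by lra. lra.
Qed.

Lemma sol_dbound n m A B w : LinSys n m A B -> sol n m A B w -> forall T, 0 <= T -> exists K, 0 < K /\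
  forall t, 0 <= t <= T -> Rabs (dyN n m A B w t) <= 4 * K * yN n m (w t).
Proof. intros HL Hs T HT. destruct (sol_dboundU n m A B HL T HT) as [K [HK H]]. exists K; split; auto. Qed.

Lemma sol_upU n m A B : LinSys n m A B -> forall T, 0 <= T -> exists K, 0 < K /\ forall w, sol n m A B w ->
  forall t, 0 <= t <= T -> yN n m (w t) <= yN n m (w 0) * exp (5 * K * t).
Proof.
  intros HL T HT. destruct (sol_dboundU n m A B HL T HT) as [K [HK Hb]]. exists K; split; auto. intros w Hs.
  apply (gron_up T K (fun s => yN n m (w s)) (dyN n m A B w)); auto. apply yN_nonneg.
  intros t Ht. split. apply dn_yN; auto; lra. specialize (Hb w Hs t Ht). pose proof (Rle_abs (dyN n m A B w t)). lra.
Qed.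

Lemma sol_up n m A B w : LinSys n m A B -> sol n m A B w -> forall T, 0 <= T -> exists K, 0 < K /\
  forall t, 0 <= t <= T -> yN n m (w t) <= yN n m (w 0) * exp (5 * K * t).
Proof.
  intros HL Hs T HT. destruct (sol_dbound n m A B w HL Hs T HT) as [K [HK Hb]]. exists K; split; auto.
  apply (gron_up T K (fun s => yN n m (w s)) (dyN n m A B w)); auto. apply yN_nonneg.
  intros t Ht. split. apply dn_yN; auto; lra. specialize (Hb t Ht). pose proof (Rle_abs (dyN n m A B w t)). lra.
Qed.

Lemma sol_zero n m A B w : LinSys n m A B -> sol n m A B w -> yN n m (w 0) = 0 ->
  forall t, 0 <= t -> yN n m (w t) = 0.
Proof.
  intros HL Hs H0 t Ht. destruct (sol_up n m A B w HL Hs t Ht) as [K [HK Hb]].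
  specialize (Hb t ltac:(lra)). rewrite H0 in Hb. pose proof (yN_nonneg n m (w t)). lra.
Qed.

Lemma sol_split_pt (p : pt) : p = (fst p, snd p).
Proof. destruct p; reflexivity. Qed.

Lemma invariance n m A B w : LinSys n m A B -> sol n m A B w -> 0 < hL n m (w 0) ->
  forall t, 0 <= t -> 0 < hL n m (w t).
Proof.
  intros HL Hs H0 T HT.
  destruct (cone_at n m A B HL) as [c1 [Hc1 HC]].
  destruct (sol_dbound n m A B w HL Hs T HT) as [K [HK Hb]].
  assert (Hy0 : 0 < yN n m (w 0)). { unfold hL, yN in *. pose proof (nsq_nonneg m (snd (w 0))). lra. }
  pose proof (gron_low T K (fun s => yN n m (w s)) (dyN n m A B w) HT HK Hy0) as GL.
  assert (GL' : forall t, 0 <= t <= T -> deriv_nonneg (fun s => yN n m (w s) - yN n m (w 0) / 2 * exp (-8 * K * s)) t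
     (dyN n m A B w t - yN n m (w 0) / 2 * (-8 * K * exp (-8 * K * t))) /\
     (yN n m (w t) - yN n m (w 0) / 2 * exp (-8 * K * t) = 0 ->
      0 < dyN n m A B w t - yN n m (w 0) / 2 * (-8 * K * exp (-8 * K * t)))).
  { apply GL. intros t Ht. split. apply dn_yN; auto; lra. specialize (Hb t Ht).
    pose proof (Rabs_pos (dyN n m A B w t)). pose proof (Rle_abs (- dyN n m A B w t)) as Hq. rewrite Rabs_Ropp in Hq. lra. }
  assert (HH : forall t, 0 <= t <= T -> 0 < hL n m (w t) /\ 0 < yN n m (w t) - yN n m (w 0) / 2 * exp (-8 * K * t)).
  { apply (first_zero T (fun s => hL n m (w s)) (fun s => yN n m (w s) - yN n m (w 0) / 2 * exp (-8 * K * s))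
           (dhL n m A B w) (fun t => dyN n m A B w t - yN n m (w 0) / 2 * (-8 * K * exp (-8 * K * t)))); auto.
    - intros t Ht. split. apply dn_hL; auto; lra. apply GL'; auto.
    - cbv beta. replace (-8 * K * 0) with 0 by ring. rewrite exp_0. lra.
    - intros t Ht _ N1 N2. cbv beta in *. split.
      + intros Z. destruct (HC t ltac:(lra)) as [al [l [r1 [r2 [Hal [Hl [Hr1 [Hr2 [P1 P2]]]]]]]]].
        destruct (Hs t ltac:(lra)) as [[Xa Xz] _].
        unfold hL in Z. assert (Hle : nsq m (snd (w t)) <= nsq n (fst (w t))) by lra.
        specialize (P1 _ _ Xa Xz Hle). specialize (P2 _ _ Xa Xz).
        pose proof (normprod_le n m _ _ Hle).
        rewrite <- sol_split_pt in P1, P2.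
        assert (Hpos : 0 < nsq n (fst (w t))).
        { pose proof (exp_pos (-8 * K * t)). unfold yN in N2.
          assert (Hq : 0 < yN n m (w 0) / 2 * exp (-8 * K * t)) by (apply Rmult_lt_0_compat; lra). unfold yN in Hq. lra. }
        unfold dhL. assert (0 < c1 * nsq n (fst (w t))) by (apply Rmult_lt_0_compat; lra). nra.
      + apply GL'. lra. }
  apply HH; lra.
Qed.

Lemma nsq_self_sub k z : nsq k (vsub z z) = 0.
Proof. rewrite nsq_sub. unfold nsq. ring. Qed.

Lemma norm_vsub_le k u v : norm k (vsub u v) <= norm k u + norm k v.
Proof. rewrite vsub_as. eapply Rle_trans. apply norm_triangle. rewrite norm_opp. lra. Qed.

Lemma ratio n m A B : LinSys n m A B -> exists c1, 0 < c1 /\ forall u1 u2 T,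
  sol n m A B u1 -> sol n m A B u2 -> 0 <= T -> snd (u1 0) = snd (u2 0) ->
  (forall t, 0 <= t <= T -> hL n m (u1 t) <= 0 /\ hL n m (u2 t) <= 0) ->
  nsq n (vsub (fst (u1 0)) (fst (u2 0))) * (1 + 2 * c1 * T) <= 4 * (2 * nsq m (snd (u1 0)) + 1).
Proof.
  intros HL. destruct (cone_at n m A B HL) as [c1 [Hc1 HC]]. exists c1. split; auto.
  intros u1 u2 T S1 S2 HT Ez Hcone.
  set (w := fun s => psub (u1 s) (u2 s)).
  assert (Sw : sol n m A B w) by (apply sol_sub; auto; apply HL).
  set (A0 := nsq n (vsub (fst (u1 0)) (fst (u2 0)))).
  pose proof (nsq_nonneg m (snd (u1 0))) as Hz0.
  destruct (Req_dec A0 0) as [EA|NA].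
  { rewrite EA. lra. }
  assert (HA0 : 0 < A0) by (pose proof (nsq_nonneg n (vsub (fst (u1 0)) (fst (u2 0)))); unfold A0 in *; lra).
  set (Ds := fun s => nsq m (snd (u1 s)) + nsq m (snd (u2 s))).
  assert (HD0 : Ds 0 = 2 * nsq m (snd (u1 0))) by (unfold Ds; rewrite Ez; ring).
  set (Rp := A0 / (Ds 0 + 1) / 2).
  assert (HRp : 0 < Rp) by (unfold Rp; apply Rdiv_lt_0_compat; [apply Rdiv_lt_0_compat|]; lra).
  set (dD := fun t => 2 * dot m (snd (u1 t)) (B t (u1 t)) + 2 * dot m (snd (u2 t)) (B t (u2 t))).
  set (y2 := fun s => nsq n (fst (w s)) - Rp * (1 + 2 * c1 * s) * (Ds s + 1)).
  set (d2 := fun t => 2 * dot n (fst (w t)) (A t (w t)) -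
                      (Rp * (0 + 2 * c1 * 1) * (Ds t + 1) + Rp * (1 + 2 * c1 * t) * (dD t + 0))).
  assert (Hfw : forall s, fst (w s) = vsub (fst (u1 s)) (fst (u2 s))) by reflexivity.
  assert (Hsw : forall s, snd (w s) = vsub (snd (u1 s)) (snd (u2 s))) by reflexivity.
  assert (HH : forall t, 0 <= t <= T -> 0 < hL n m (w t) /\ 0 < y2 t).
  { apply (first_zero T (fun s => hL n m (w s)) y2 (dhL n m A B w) d2 HT).
    - intros t Ht. split. apply dn_hL; auto; lra.
      unfold y2, d2. apply dn_minus. lra. apply (dn_nsq_fst n m A B); auto; lra.
      apply (dn_mult (fun s => Rp * (1 + 2 * c1 * s)) (fun s => Ds s + 1)). lra.
      apply dn_scal. lra. apply dn_plus. lra. apply dn_const; lra. apply dn_scal. lra. apply dn_id; lra.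
      apply dn_plus. lra. unfold Ds, dD. apply dn_plus. lra. apply (dn_nsq_snd n m A B); auto; lra.
      apply (dn_nsq_snd n m A B); auto; lra. apply dn_const; lra.
    - cbv beta. unfold hL. rewrite Hfw, Hsw, Ez, nsq_self_sub. fold A0. lra.
    - unfold y2. rewrite Hfw. fold A0. unfold Rp. field_simplify. lra. unfold Ds. 
      pose proof (nsq_nonneg m (snd (u1 0))); pose proof (nsq_nonneg m (snd (u2 0))). lra.
    - intros t Ht _ N1 N2. cbv beta in N1.
      destruct (HC t ltac:(lra)) as [al [l [r1 [r2 [Hal [Hl [Hr1 [Hr2 [P1 P2]]]]]]]]].
      destruct (Sw t ltac:(lra)) as [[Xa Xz] _].
      destruct (S1 t ltac:(lra)) as [[X1a X1z] _]. destruct (S2 t ltac:(lra)) as [[X2a X2z] _].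
      destruct (Hcone t ltac:(lra)) as [C1 C2]. unfold hL in C1, C2, N1.
      assert (Hle : nsq m (snd (w t)) <= nsq n (fst (w t))) by lra.
      pose proof (P1 _ _ Xa Xz Hle) as Q1. pose proof (P2 _ _ Xa Xz) as Q2.
      rewrite <- sol_split_pt in Q1, Q2.
      pose proof (normprod_le n m _ _ Hle) as Q3.
      pose proof (P2 _ _ X1a X1z) as B1. pose proof (P2 _ _ X2a X2z) as B2.
      rewrite <- sol_split_pt in B1, B2.
      pose proof (normprod_le m n (snd (u1 t)) (fst (u1 t)) ltac:(lra)) as B1'.
      pose proof (normprod_le m n (snd (u2 t)) (fst (u2 t)) ltac:(lra)) as B2'.
      assert (HdD : dD t <= 2 * (l + r2) * Ds t).
      { unfold dD, Ds; cbv beta.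
        assert (r2 * (norm n (fst (u1 t)) * norm m (snd (u1 t))) <= r2 * nsq m (snd (u1 t))) by (apply Rmult_le_compat_l; lra).
        assert (r2 * (norm n (fst (u2 t)) * norm m (snd (u2 t))) <= r2 * nsq m (snd (u2 t))) by (apply Rmult_le_compat_l; lra).
        lra. }
      assert (HDs : 0 <= Ds t) by (unfold Ds; pose proof (nsq_nonneg m (snd (u1 t))); pose proof (nsq_nonneg m (snd (u2 t))); lra).
      set (rho := Rp * (1 + 2 * c1 * t)).
      assert (Hrho : Rp < rho). { unfold rho. assert (0 < Rp * (2 * c1 * t)) by (apply Rmult_lt_0_compat; nra). nra. }
      set (Aw := nsq n (fst (w t))) in *.
      assert (HAw : rho * (Ds t + 1) <= Aw) by (unfold y2 in N2; cbv beta in N2; unfold Aw, rho; lra).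
      assert (HrS : 0 < rho * (Ds t + 1)) by (apply Rmult_lt_0_compat; lra).
      split.
      + intros Z. unfold dhL. assert (0 < c1 * Aw) by (apply Rmult_lt_0_compat; lra). nra.
      + intros Z. unfold y2 in Z. cbv beta in Z. fold rho Aw in Z. unfold d2. fold Aw rho.
        assert (HX1 : (al - r1) * (rho * (Ds t + 1)) <= dot n (fst (w t)) (A t (w t))) by (assert (EAw : Aw = rho * (Ds t + 1)) by lra; rewrite <- EAw; lra).
        assert (HX2 : rho * dD t <= rho * (2 * (l + r2) * (Ds t + 1))).
        { apply Rmult_le_compat_l. lra. nra. }
        assert (HX3 : (al - r1 - l - r2) * (rho * (Ds t + 1)) >= c1 * (rho * (Ds t + 1))).
        { apply Rmult_ge_compat_r; lra. }
        assert (HX4 : 0 < c1 * ((rho - Rp) * (Ds t + 1))) by (apply Rmult_lt_0_compat; [lra| apply Rmult_lt_0_compat; lra]).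
        nra. }
  destruct (HH T ltac:(lra)) as [_ HT2]. unfold y2 in HT2. cbv beta in HT2.
  destruct (Hcone T ltac:(lra)) as [C1 C2]. unfold hL in C1, C2.
  assert (HAT : nsq n (fst (w T)) <= 2 * Ds T).
  { rewrite Hfw. rewrite <- norm_sq. unfold Ds. rewrite <- !norm_sq.
    pose proof (norm_vsub_le n (fst (u1 T)) (fst (u2 T))).
    pose proof (norm_le_nsq m n (snd (u1 T)) (fst (u1 T)) ltac:(lra)).
    pose proof (norm_le_nsq m n (snd (u2 T)) (fst (u2 T)) ltac:(lra)).
    pose proof (norm_nonneg n (vsub (fst (u1 T)) (fst (u2 T)))).
    pose proof (norm_nonneg m (snd (u1 T))). pose proof (norm_nonneg m (snd (u2 T))).
    pose proof (norm_nonneg n (fst (u1 T))). pose proof (norm_nonneg n (fst (u2 T))).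
    set (N := norm n (vsub (fst (u1 T)) (fst (u2 T)))) in *.
    set (z1 := norm m (snd (u1 T))) in *. set (z2 := norm m (snd (u2 T))) in *.
    assert (N <= z1 + z2) by lra.
    assert (N * N <= (z1 + z2) * (z1 + z2)) by (apply Rmult_le_compat; lra). pose proof (Rle_0_sqr (z1 - z2)) as Hsq; unfold Rsqr in Hsq. clearbody N z1 z2. nra. }
  assert (HDTT : 0 <= Ds T) by (unfold Ds; pose proof (nsq_nonneg m (snd (u1 T))); pose proof (nsq_nonneg m (snd (u2 T))); lra).
  assert (Hr : Rp * (1 + 2 * c1 * T) < 2).
  { apply Rnot_le_lt. intros Hn. assert (2 * (Ds T + 1) <= Rp * (1 + 2 * c1 * T) * (Ds T + 1)) by (apply Rmult_le_compat_r; lra). lra. }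
  unfold Rp in Hr. rewrite HD0 in Hr. fold A0.
  assert (Hpos : 0 < 2 * nsq m (snd (u1 0)) + 1) by lra.
  apply Rmult_lt_compat_r with (r := 2 * (2 * nsq m (snd (u1 0)) + 1)) in Hr; [|lra].
  replace (A0 / (2 * nsq m (snd (u1 0)) + 1) / 2 * (1 + 2 * c1 * T) * (2 * (2 * nsq m (snd (u1 0)) + 1)))
    with (A0 * (1 + 2 * c1 * T)) in Hr by (field; lra). lra.
Qed.

Lemma LinSys_shift n m A B s0 : 0 <= s0 -> LinSys n m A B -> LinSys n m (fun t => A (s0 + t)) (fun t => B (s0 + t)).
Proof.
  intros Hs0 [HL [[c1 [Hc1 HC]] HB]]. split; [|split].
  - intros t Ht. apply HL. lra.
  - exists c1. split; auto. intros t Ht. apply HC. lra.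
  - intros T HT. destruct (HB (s0 + T) ltac:(lra)) as [K [HK Hb]]. exists K. split; auto.
    intros t Ht. apply Hb. lra.
Qed.

Lemma sol_shift n m A B w s0 : 0 <= s0 -> sol n m A B w ->
  sol n m (fun t => A (s0 + t)) (fun t => B (s0 + t)) (fun t => w (s0 + t)).
Proof.
  intros Hs0 H t Ht. destruct (H (s0 + t) ltac:(lra)) as [X [D1 D2]]. split; auto. split.
  - intros i Hi. apply (dn_shift (fun s => fst (w s) i)); auto.
  - intros i Hi. apply (dn_shift (fun s => snd (w s) i)); auto.
Qed.

Lemma backward n m A B u : LinSys n m A B -> sol n m A B u -> forall t, 0 <= t -> hL n m (u t) <= 0 ->
  forall s, 0 <= s <= t -> hL n m (u s) <= 0.
Proof.
  intros HL Hs t Ht H s Hs'. apply Rnot_lt_le. intros Hp.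
  pose proof (invariance n m _ _ _ (LinSys_shift n m A B s ltac:(lra) HL) (sol_shift n m A B u s ltac:(lra) Hs)) as Inv.
  cbv beta in Inv. rewrite Rplus_0_r in Inv. specialize (Inv Hp (t - s) ltac:(lra)).
  replace (s + (t - s)) with t in Inv by ring. lra.
Qed.

Lemma pt_eq_of n m p q : inX n m p -> inX n m q -> yN n m (psub p q) = 0 -> p = q.
Proof.
  intros [Hpa Hpz] [Hqa Hqz] E. unfold yN in E. simpl in E.
  pose proof (nsq_nonneg n (vsub (fst p) (fst q))). pose proof (nsq_nonneg m (vsub (snd p) (snd q))).
  assert (E1 : nsq n (vsub (fst p) (fst q)) = 0) by lra.
  assert (E2 : nsq m (vsub (snd p) (snd q)) = 0) by lra.
  destruct p as [pa pz]; destruct q as [qa qz]; simpl in *. f_equal; apply functional_extensionality; intros i.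
  - destruct (Nat.lt_ge_cases i n). pose proof (nsq_zero_coord _ _ E1 i H1). unfold vsub in H2. lra.
    rewrite Hpa, Hqa; auto.
  - destruct (Nat.lt_ge_cases i m). pose proof (nsq_zero_coord _ _ E2 i H1). unfold vsub in H2. lra.
    rewrite Hpz, Hqz; auto.
Qed.

Lemma yN_self n m p : yN n m (psub p p) = 0.
Proof. unfold yN. simpl. rewrite !nsq_self_sub. ring. Qed.

Lemma sol_eq n m A B w1 w2 : LinSys n m A B -> sol n m A B w1 -> sol n m A B w2 -> w1 0 = w2 0 ->
  forall t, 0 <= t -> w1 t = w2 t.
Proof.
  intros HL S1 S2 E t Ht. pose proof (sol_sub n m A B w1 w2 (proj1 HL) S1 S2) as Sw.
  pose proof (sol_zero n m A B _ HL Sw) as Z. cbv beta in Z. rewrite E, yN_self in Z.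
  apply (pt_eq_of n m). apply S1; auto. apply S2; auto. apply Z; auto.
Qed.

Definition qsol n m A B (F : R -> pt -> pt) : Prop :=
  forall v, inX n m v -> F 0 v = v /\ sol n m A B (fun t => F t v).

Lemma qsol_add n m A B F : LinSys n m A B -> qsol n m A B F -> forall p q, inX n m p -> inX n m q ->
  forall t, 0 <= t -> F t (padd p q) = padd (F t p) (F t q).
Proof.
  intros HL HF p q Hp Hq t Ht. destruct (HF p Hp) as [E1 S1]. destruct (HF q Hq) as [E2 S2].
  destruct (HF (padd p q) (inX_padd _ _ _ _ Hp Hq)) as [E3 S3].
  apply (sol_eq n m A B (fun t => F t (padd p q)) (fun t => padd (F t p) (F t q))); auto.
  apply sol_add; auto. apply HL. cbv beta. rewrite E1, E2, E3; auto.
Qed.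

Lemma qsol_scal n m A B F : LinSys n m A B -> qsol n m A B F -> forall c p, inX n m p ->
  forall t, 0 <= t -> F t (pscal c p) = pscal c (F t p).
Proof.
  intros HL HF c p Hp t Ht. destruct (HF p Hp) as [E1 S1].
  destruct (HF (pscal c p) (inX_pscal _ _ _ _ Hp)) as [E3 S3].
  apply (sol_eq n m A B (fun t => F t (pscal c p)) (fun t => pscal c (F t p))); auto.
  apply sol_scal; auto. apply HL. cbv beta. rewrite E1, E3; auto.
Qed.

Definition skip (k j : nat) : nat := if Nat.ltb j k then j else S j.
Definition unskip (k j : nat) : nat := if Nat.ltb j k then j else pred j.

Lemma skip_ne k j : skip k j <> k.
Proof. unfold skip. destruct (Nat.ltb_spec j k); lia. Qed.
Lemma unskip_skip k j : unskip k (skip k j) = j.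
Proof. unfold skip, unskip. destruct (Nat.ltb_spec j k). destruct (Nat.ltb_spec j k); lia.
  destruct (Nat.ltb_spec (S j) k); lia. Qed.
Lemma skip_le k j N : (j <= N)%nat -> (skip k j <= S N)%nat.
Proof. unfold skip. destruct (Nat.ltb_spec j k); lia. Qed.

Lemma sumR_split N k F : (k <= N)%nat -> sumR (S N) F = F k + sumR N (fun j => F (skip k j)).
Proof.
  induction N; intros Hk.
  - assert (k = 0)%nat by lia. subst. simpl. ring.
  - destruct (Nat.eq_dec k (S N)) as [->|Hne].
    + change (sumR (S (S N)) F) with (sumR (S N) F + F (S N)).
      rewrite (sumR_ext (S N) (fun j => F (skip (S N) j)) F). ring.
      intros i Hi. unfold skip. destruct (Nat.ltb_spec i (S N)); auto; lia.
    + change (sumR (S (S N)) F) with (sumR (S N) F + F (S N)). rewrite IHN by lia.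
      change (sumR (S N) (fun j => F (skip k j))) with (sumR N (fun j => F (skip k j)) + F (skip k N)).
      replace (skip k N) with (S N) by (unfold skip; destruct (Nat.ltb_spec N k); lia). ring.
Qed.

Lemma dep N : forall (w : nat -> nat -> R), (forall j i, (j <= N)%nat -> (N <= i)%nat -> w j i = 0) ->
  exists c : nat -> R, (exists j, (j <= N)%nat /\ c j <> 0) /\ forall i, sumR (S N) (fun j => c j * w j i) = 0.
Proof.
  induction N; intros w Hw.
  - exists (fun _ => 1). split. exists 0%nat; split; auto; lra. intros i. simpl. rewrite (Hw 0%nat i) by lia. ring.
  - destruct (classic (exists k, (k <= S N)%nat /\ w k N <> 0)) as [[k [Hk Hwk]]|Hall].
    + set (w' := fun j i => w (skip k j) i - (w (skip k j) N / w k N) * w k i).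
      destruct (IHN w') as [c' [[j0 [Hj0 Hc0]] Hs]].
      { intros j i Hj Hi. unfold w'. destruct (Nat.eq_dec i N) as [->|Hne].
        field; auto. assert (H1 : w (skip k j) i = 0) by (apply Hw; [apply skip_le; auto | lia]).
        assert (H2 : w k i = 0) by (apply Hw; lia). rewrite H1, H2. ring. }
      set (S0 := sumR (S N) (fun j' => c' j' * (w (skip k j') N / w k N))).
      exists (fun j => if Nat.eqb j k then - S0 else c' (unskip k j)). split.
      * exists (skip k j0). split. apply skip_le; auto.
        destruct (Nat.eqb_spec (skip k j0) k). exfalso; apply (skip_ne k j0); auto.
        rewrite unskip_skip. auto.
      * intros i. rewrite (sumR_split (S N) k) by auto. rewrite Nat.eqb_refl.
        rewrite (sumR_ext (S N) _ (fun j => c' j * w (skip k j) i)).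
        2:{ intros j Hj. destruct (Nat.eqb_spec (skip k j) k). exfalso; apply (skip_ne k j); auto.
            rewrite unskip_skip. auto. }
        specialize (Hs i). unfold w' in Hs.
        rewrite (sumR_ext (S N) _ (fun j => c' j * w (skip k j) i - (c' j * (w (skip k j) N / w k N)) * w k i)) in Hs
          by (intros; ring).
        rewrite sumR_minus in Hs.
        rewrite (sumR_ext (S N) (fun j => c' j * (w (skip k j) N / w k N) * w k i) (fun j => w k i * (c' j * (w (skip k j) N / w k N)))) in Hs by (intros; ring).
        rewrite sumR_scal in Hs. fold S0 in Hs. lra.
    + destruct (IHN w) as [c' [[j0 [Hj0 Hc0]] Hs]].
      { intros j i Hj Hi. destruct (Nat.eq_dec i N) as [->|Hne].
        apply NNPP; intros Hn. apply Hall. exists j; split; auto; lia. apply Hw; lia. }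
      exists (fun j => if Nat.leb j N then c' j else 0). split.
      * exists j0. split. lia. destruct (Nat.leb_spec j0 N); auto; lia.
      * intros i. change (sumR (S (S N)) ?F) with (sumR (S N) F + F (S N)).
        cbv beta. destruct (Nat.leb_spec (S N) N). lia.
        rewrite (sumR_ext (S N) _ (fun j => c' j * w j i)). rewrite (Hs i). ring.
        intros j Hj. destruct (Nat.leb_spec j N); auto; lia.
Qed.

Definition evec (j : nat) : vec := fun i => if Nat.eqb i j then 1 else 0.
Definition trunc (N : nat) (c : nat -> R) : vec := fun i => if Nat.ltb i N then c i else 0.

Lemma surj n (Lm : vec -> vec) :
  (forall a, supp n a -> supp n (Lm a)) ->
  (forall a b, supp n a -> supp n b -> Lm (vadd a b) = vadd (Lm a) (Lm b)) ->
  (forall c a, supp n a -> Lm (vscal c a) = vscal c (Lm a)) ->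
  (forall a, supp n a -> (forall i, (i < n)%nat -> Lm a i = 0) -> forall i, (i < n)%nat -> a i = 0) ->
  forall y, supp n y -> exists a, supp n a /\ forall i, (i < n)%nat -> Lm a i = y i.
Proof.
  intros HS HA HM HI y Hy.
  assert (Hz : forall i, Lm vzero i = 0).
  { intros i. assert (vzero = vscal 0 vzero) by (apply functional_extensionality; intros; unfold vscal, vzero; ring).
    rewrite H, HM. unfold vscal; ring. apply supp_vzero. }
  assert (He : forall j, (j < n)%nat -> supp n (evec j)).
  { intros j Hj i Hi. unfold evec. destruct (Nat.eqb_spec i j); auto; lia. }
  assert (Ht : forall c N, supp n (trunc N c) \/ (N <= n)%nat -> (N <= n)%nat -> supp n (trunc N c)).
  { intros c N _ HN i Hi. unfold trunc. destruct (Nat.ltb_spec i N); auto; lia. }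
  assert (Hlin : forall c N, (N <= n)%nat -> forall i, Lm (trunc N c) i = sumR N (fun j => c j * Lm (evec j) i)).
  { intros c N. induction N; intros HN i.
    - simpl. replace (trunc 0 c) with vzero. apply Hz. apply functional_extensionality; intros; unfold trunc; simpl; auto.
    - replace (trunc (S N) c) with (vadd (trunc N c) (vscal (c N) (evec N))).
      rewrite HA. unfold vadd. rewrite HM. unfold vscal. rewrite IHN by lia. simpl. ring.
      apply He; lia. apply Ht; auto; lia. apply supp_vscal, He; lia.
      apply functional_extensionality; intros j. unfold vadd, vscal, trunc, evec.
      destruct (Nat.ltb_spec j N); destruct (Nat.ltb_spec j (S N)); destruct (Nat.eqb_spec j N); try lia; subst; ring. }
  destruct (dep n (fun j i => if Nat.eqb j n then y i else Lm (evec j) i)) as [c [[j0 [Hj0 Hc0]] Hs]].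
  { intros j i Hj Hi. destruct (Nat.eqb_spec j n). apply Hy; auto. apply HS; auto. apply He; lia. }
  assert (Hs' : forall i, sumR n (fun j => c j * Lm (evec j) i) + c n * y i = 0).
  { intros i. rewrite <- (Hs i). simpl. rewrite Nat.eqb_refl. f_equal. apply sumR_ext. intros j Hj.
    destruct (Nat.eqb_spec j n); auto; lia. }
  destruct (Req_dec (c n) 0) as [E|E].
  - exfalso. assert (Hk : forall i, (i < n)%nat -> trunc n c i = 0).
    { apply HI. apply Ht; auto. intros i Hi. rewrite Hlin by lia. specialize (Hs' i). rewrite E in Hs'. lra. }
    destruct (Nat.eq_dec j0 n) as [->|Hne]. auto.
    apply Hc0. specialize (Hk j0 ltac:(lia)). unfold trunc in Hk. destruct (Nat.ltb_spec j0 n); auto; lia.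
  - exists (vscal (- / c n) (trunc n c)). split. apply supp_vscal, Ht; auto.
    intros i Hi. rewrite HM by (apply Ht; auto). unfold vscal. rewrite Hlin by lia.
    specialize (Hs' i). field_simplify; auto. replace (sumR n (fun j => c j * Lm (evec j) i)) with (- (c n * y i)) by lra.
    field. auto.
Qed.

Lemma nsq_zero_of k v : (forall i, (i < k)%nat -> v i = 0) -> nsq k v = 0.
Proof. intros H. unfold nsq, dot. rewrite (sumR_ext k _ (fun _ => 0)). apply sumR_zero.
  intros i Hi. rewrite H; auto; ring. Qed.

Lemma nsq_vzero k : nsq k vzero = 0.
Proof. apply nsq_zero_of. reflexivity. Qed.

Lemma pair_vadd a b : (vadd a b, vzero) = padd (a, vzero) (b, vzero).
Proof. unfold padd; simpl. f_equal. apply functional_extensionality; intros; unfold vadd, vzero; ring. Qed.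
Lemma pair_vscal c a : (vscal c a, vzero) = pscal c (a, vzero).
Proof. unfold pscal; simpl. f_equal. apply functional_extensionality; intros; unfold vscal, vzero; ring. Qed.
Lemma pair_az a z : (a, z) = padd (a, vzero) (vzero, z).
Proof. unfold padd; simpl. f_equal; apply functional_extensionality; intros; unfold vadd, vzero; ring. Qed.

Lemma step1 n m A B F : LinSys n m A B -> qsol n m A B F -> forall zz, supp m zz -> forall T, 0 <= T ->
  exists a, supp n a /\ forall s, 0 <= s <= T -> hL n m (F s (a, zz)) <= 0.
Proof.
  intros HL HF zz Hzz T HT.
  assert (HXa : forall a, supp n a -> inX n m (a, vzero)) by (intros; split; auto; apply supp_vzero).
  destruct (surj n (fun a => fst (F T (a, vzero)))) with (y := vscal (-1) (fst (F T (vzero, zz)))) as [a [Ha Hya]].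
  - intros a Ha. destruct (HF _ (HXa a Ha)) as [_ S]. apply (S T HT).
  - intros a b Ha Hb. rewrite pair_vadd, (qsol_add n m A B F HL HF); auto.
  - intros c a Ha. rewrite pair_vscal, (qsol_scal n m A B F HL HF); auto.
  - intros a Ha Hz. apply NNPP; intros Hn. apply not_all_ex_not in Hn. destruct Hn as [i Hi].
    apply imply_to_and in Hi. destruct Hi as [Hi Hai].
    destruct (HF _ (HXa a Ha)) as [E0 S].
    assert (Hp : 0 < hL n m (F 0 (a, vzero))).
    { rewrite E0. unfold hL. simpl. rewrite nsq_vzero. pose proof (coord_le n a i Hi).
      assert (0 < a i * a i) by (apply Rsqr_pos_lt in Hai; unfold Rsqr in Hai; auto). lra. }
    pose proof (invariance n m A B _ HL S Hp T HT) as Inv. cbv beta in Inv. unfold hL in Inv.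
    rewrite nsq_zero_of in Inv by auto. pose proof (nsq_nonneg m (snd (F T (a, vzero)))). lra.
  - apply supp_vscal. destruct (HF (vzero, zz)) as [_ S]. split; auto; apply supp_vzero. apply (S T HT).
  - exists a. split; auto.
    destruct (HF (a, zz)) as [_ S]. split; auto.
    apply (backward n m A B _ HL S T HT).
    unfold hL. rewrite (nsq_zero_of n). pose proof (nsq_nonneg m (snd (F T (a, zz)))). lra.
    intros i Hi. rewrite pair_az, (qsol_add n m A B F HL HF); auto. simpl. unfold vadd.
    rewrite Hya by auto. unfold vscal. ring. split; auto; apply supp_vzero.
Qed.

Lemma nsq_conv (f : nat -> vec) (g : vec) : forall k, (forall i, (i < k)%nat -> Un_cv (fun j => f j i) (g i)) ->
  forall eps, 0 < eps -> exists N, forall j, (j >= N)%nat -> nsq k (vsub g (f j)) < eps.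
Proof.
  induction k; intros H eps Heps.
  - exists 0%nat. intros. unfold nsq, dot. simpl. lra.
  - destruct (IHk (fun i Hi => H i ltac:(lia)) (eps / 2) ltac:(lra)) as [N1 HN1].
    assert (Hr : 0 < sqrt (eps / 2)) by (apply sqrt_lt_R0; lra).
    destruct (H k ltac:(lia) _ Hr) as [N2 HN2].
    exists (Nat.max N1 N2). intros j Hj.
    specialize (HN1 j ltac:(lia)). specialize (HN2 j ltac:(lia)). unfold Rdist in HN2.
    unfold nsq, dot. simpl. fold (dot k (vsub g (f j)) (vsub g (f j))). fold (nsq k (vsub g (f j))).
    unfold vsub. rewrite Rabs_minus_sym in HN2.
    assert (Hsq : (g k - f j k) * (g k - f j k) < eps / 2).
    { pose proof (Rabs_pos (g k - f j k)).
      replace ((g k - f j k) * (g k - f j k)) with (Rabs (g k - f j k) * Rabs (g k - f j k)).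
      replace (eps / 2) with (sqrt (eps / 2) * sqrt (eps / 2)) by (apply sqrt_sqrt; lra).
      apply Rmult_le_0_lt_compat; auto.
      rewrite <- Rabs_mult. pose proof (Rle_0_sqr (g k - f j k)). unfold Rsqr in *. rewrite Rabs_right; lra. }
    unfold vsub in HN1. lra.
Qed.

Lemma sqrt_le_1plus y : 0 <= y -> sqrt y <= 1 + y.
Proof. intros Hy. apply sqrt_le_of_sq; try lra. nra. Qed.

Lemma hL_bound_sum n m p q x e Pb : hL n m p <= 0 -> norm m (snd p) = x -> x <= Pb -> 0 <= e ->
  normX n m q <= e -> hL n m (padd p q) <= 4 * e * (Pb + e).
Proof.
  intros Hp Hx HPb He Hq. unfold hL in *. destruct p as [ap zp]; destruct q as [aq zq]. simpl in *.
  pose proof (norm_fst_le n m (aq, zq)); pose proof (norm_snd_le n m (aq, zq)). simpl in *.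
  pose proof (norm_triangle n ap aq). pose proof (norm_sub_triangle m zp zq).
  assert (Hap : norm n ap <= x). { rewrite <- Hx. apply norm_le_nsq. lra. }
  pose proof (norm_nonneg n ap); pose proof (norm_nonneg n aq); pose proof (norm_nonneg m zq);
  pose proof (norm_nonneg m zp); pose proof (norm_nonneg n (vadd ap aq)); pose proof (norm_nonneg m (vadd zp zq)).
  rewrite <- !norm_sq'.
  set (N1 := norm n (vadd ap aq)) in *. set (N2 := norm m (vadd zp zq)) in *.
  assert (HN1 : N1 <= x + e) by lra.
  assert (HN1s : N1 * N1 <= (x + e) * (x + e)) by (apply Rmult_le_compat; lra).
  destruct (Rle_dec e x).
  - assert (HN2 : x - e <= N2) by lra.
    assert (HN2s : (x - e) * (x - e) <= N2 * N2) by (apply Rmult_le_compat; lra).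
    assert (x * e <= Pb * e) by (apply Rmult_le_compat_r; lra). nra.
  - assert (0 <= N2 * N2) by nra. assert (x * e <= e * e) by (apply Rmult_le_compat_r; lra).
    assert (e * e <= e * Pb + e * e) by nra. nra.
Qed.

Lemma main_abstract n m A B F : LinSys n m A B -> qsol n m A B F -> forall zz, supp m zz ->
  exists! p, (inX n m p /\ forall t, 0 <= t -> hL n m (F t p) <= 0) /\ (inX n m p /\ snd p = zz).
Proof.
  intros HL HF zz Hzz.
  destruct (ratio n m A B HL) as [c1 [Hc1 Hrat]].
  set (C := 4 * (2 * nsq m zz + 1)).
  assert (HC : 0 < C) by (unfold C; pose proof (nsq_nonneg m zz); lra).
  assert (Hex : forall k : nat, exists a, supp n a /\ forall s, 0 <= s <= INR k -> hL n m (F s (a, zz)) <= 0)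
    by (intros k; apply (step1 n m A B); auto; apply pos_INR).
  set (a := fun k => proj1_sig (constructive_indefinite_description _ (Hex k))).
  assert (Ha : forall k, supp n (a k) /\ forall s, 0 <= s <= INR k -> hL n m (F s (a k, zz)) <= 0).
  { intros k. unfold a. destruct constructive_indefinite_description; auto. }
  assert (Hsol : forall v, inX n m v -> sol n m A B (fun t => F t v)) by (intros v Hv; apply (HF v Hv)).
  assert (Hpair : forall b1 b2 T, supp n b1 -> supp n b2 -> 0 <= T ->
     (forall s, 0 <= s <= T -> hL n m (F s (b1, zz)) <= 0 /\ hL n m (F s (b2, zz)) <= 0) ->
     nsq n (vsub b1 b2) * (1 + 2 * c1 * T) <= C).
  { intros b1 b2 T H1 H2 HT Hc.
    pose proof (Hrat (fun t => F t (b1, zz)) (fun t => F t (b2, zz)) T (Hsol _ (inX_pair _ _ _ _ H1 Hzz))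
      (Hsol _ (inX_pair _ _ _ _ H2 Hzz)) HT) as R.
    cbv beta in R. destruct (HF (b1, zz) (inX_pair _ _ _ _ H1 Hzz)) as [E1 _].
    destruct (HF (b2, zz) (inX_pair _ _ _ _ H2 Hzz)) as [E2 _].
    rewrite E1, E2 in R. simpl in R. apply R; auto. }
  assert (Hcau : forall i, Cauchy_crit (fun k => a k i)).
  { intros i eps Heps. destruct (INR_unbounded (C / (2 * c1 * (eps * eps)))) as [N HN].
    exists N. intros j k Hj Hk. unfold Rdist.
    set (T := INR (Nat.min j k)).
    assert (HT : 0 <= T) by apply pos_INR.
    assert (HNT : INR N <= T) by (apply le_INR; lia).
    assert (HP : nsq n (vsub (a j) (a k)) * (1 + 2 * c1 * T) <= C).
    { apply Hpair; try apply Ha; auto. intros s Hs.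
      assert (T <= INR j) by (apply le_INR; lia). assert (T <= INR k) by (apply le_INR; lia).
      split; apply Ha; lra. }
    destruct (Nat.lt_ge_cases i n) as [Hi|Hi].
    - pose proof (coord_le n (vsub (a j) (a k)) i Hi) as Hc. change (vsub (a j) (a k) i) with (a j i - a k i) in Hc.
      apply Rnot_le_lt. intros Hn.
      assert (Hd : eps * eps <= (a j i - a k i) * (a j i - a k i)).
      { pose proof (Rabs_pos (a j i - a k i)).
        replace ((a j i - a k i) * (a j i - a k i)) with (Rabs (a j i - a k i) * Rabs (a j i - a k i)).
        apply Rmult_le_compat; lra. rewrite <- Rabs_mult. apply Rabs_right.
        pose proof (Rle_0_sqr (a j i - a k i)) as Hq. unfold Rsqr in Hq. lra. }
      assert (Hbig : C < 2 * c1 * T * (eps * eps)).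
      { assert (Hq : C / (2 * c1 * (eps * eps)) < T) by lra.
        assert (0 < 2 * c1 * (eps * eps)) by (apply Rmult_lt_0_compat; nra).
        apply Rmult_lt_compat_r with (r := 2 * c1 * (eps * eps)) in Hq; auto.
        replace (C / (2 * c1 * (eps * eps)) * (2 * c1 * (eps * eps))) with C in Hq by (field; nra). nra. }
      assert (0 <= 2 * c1 * T) by nra.
      assert (Hx : (eps * eps) * (1 + 2 * c1 * T) <= nsq n (vsub (a j) (a k)) * (1 + 2 * c1 * T)).
      { apply Rmult_le_compat_r. lra. lra. }
      nra.
    - rewrite (proj1 (Ha j)), (proj1 (Ha k)) by auto. rewrite Rminus_0_r, Rabs_R0. lra. }
  set (astar := fun i => proj1_sig (R_complete _ (Hcau i))).
  assert (Hlim : forall i, Un_cv (fun k => a k i) (astar i)).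
  { intros i. unfold astar. destruct R_complete; auto. }
  assert (Hsa : supp n astar).
  { intros i Hi. apply (UL_sequence (fun k => a k i)); auto.
    intros eps Heps. exists 0%nat. intros k _. unfold Rdist. rewrite (proj1 (Ha k)) by auto.
    rewrite Rminus_0_r, Rabs_R0. auto. }
  assert (HXs : inX n m (astar, zz)) by (split; auto).
  assert (Hmem : forall s, 0 <= s -> hL n m (F s (astar, zz)) <= 0).
  { intros s Hs. apply Rnot_lt_le. intros Hd0.
    destruct (sol_upU n m A B HL s Hs) as [K [HK Hup]].
    set (M := exp (5 * K * s)).
    assert (HM : 0 < M) by apply exp_pos.
    set (Pb := 1 + 2 * nsq m zz * M).
    assert (HPb : 0 <= Pb) by (unfold Pb; pose proof (nsq_nonneg m zz); nra).
    set (del := hL n m (F s (astar, zz))) in *.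
    set (e := Rmin 1 (del / (4 * (Pb + 1))) / 2).
    assert (He : 0 < e). { unfold e. apply Rdiv_lt_0_compat; [|lra]. apply Rmin_pos. lra. apply Rdiv_lt_0_compat; lra. }
    assert (He1 : e <= 1) by (unfold e; pose proof (Rmin_l 1 (del / (4 * (Pb + 1)))); lra).
    assert (Hed : 4 * e * (Pb + e) < del).
    { assert (e <= del / (4 * (Pb + 1)) / 2) by (unfold e; pose proof (Rmin_r 1 (del / (4 * (Pb + 1)))); lra).
      assert (4 * e * (Pb + e) <= 4 * e * (Pb + 1)) by (apply Rmult_le_compat_l; lra).
      assert (4 * e * (Pb + 1) <= del / 2).
      { apply Rle_trans with (4 * (del / (4 * (Pb + 1)) / 2) * (Pb + 1)).
        apply Rmult_le_compat_r; lra. right; field; lra. }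
      lra. }
    destruct (nsq_conv a astar n (fun i _ => Hlim i) (e * e / M)) as [N1 HN1].
    { apply Rdiv_lt_0_compat; nra. }
    destruct (INR_unbounded s) as [N2 HN2].
    set (k := Nat.max N1 N2).
    assert (Hks : s <= INR k) by (assert (INR N2 <= INR k) by (apply le_INR; lia); lra).
    specialize (HN1 k ltac:(lia)).
    destruct (Ha k) as [Hak Hck].
    set (b := vsub astar (a k)).
    assert (Hb : supp n b) by (apply supp_vsub; auto).
    assert (HXb : inX n m (b, vzero)) by (split; auto; apply supp_vzero).
    assert (HXk : inX n m (a k, zz)) by (split; auto).
    assert (Esplit : (astar, zz) = padd (a k, zz) (b, vzero)).
    { unfold padd, b; simpl. f_equal; apply functional_extensionality; intros; unfold vadd, vsub, vzero; ring. }
    assert (Hdeq : del = hL n m (padd (F s (a k, zz)) (F s (b, vzero)))).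
    { unfold del. rewrite Esplit. rewrite (qsol_add n m A B F HL HF); auto. }
    destruct (HF _ HXb) as [Eb Sb]. destruct (HF _ HXk) as [Ek Sk].
    assert (Hq : yN n m (F s (b, vzero)) < e * e).
    { pose proof (Hup _ Sb s ltac:(lra)) as U. cbv beta in U. rewrite Eb in U. unfold yN in U. simpl in U.
      rewrite nsq_vzero in U. fold M in U.
      assert (nsq n b * M < e * e).
      { apply Rmult_lt_compat_r with (r := M) in HN1; auto. replace (e * e / M * M) with (e * e) in HN1 by (field; lra). auto. }
      unfold yN. lra. }
    assert (Hqn : normX n m (F s (b, vzero)) <= e).
    { unfold normX. pose proof (nsq_nonneg n (fst (F s (b, vzero)))); pose proof (nsq_nonneg m (snd (F s (b, vzero)))).
      unfold yN in Hq. unfold nsq in *. apply sqrt_le_of_sq; lra. }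
    assert (Hpn : norm m (snd (F s (a k, zz))) <= Pb).
    { pose proof (Hup _ Sk s ltac:(lra)) as U. cbv beta in U. rewrite Ek in U. unfold yN in U. simpl in U. fold M in U.
      pose proof (Hck 0 ltac:(split; [lra| apply pos_INR])) as H0. rewrite Ek in H0. unfold hL in H0. simpl in H0.
      pose proof (norm_snd_le n m (F s (a k, zz))).
      pose proof (sqrt_le_1plus (yN n m (F s (a k, zz))) (yN_nonneg _ _ _)).
      assert (yN n m (F s (a k, zz)) <= 2 * nsq m zz * M).
      { unfold yN. apply Rle_trans with ((nsq n (a k) + nsq m zz) * M); auto.
        apply Rmult_le_compat_r; lra. }
      unfold normX in H. unfold yN in H1, H2. unfold Pb. unfold nsq in *. lra. }
    pose proof (hL_bound_sum n m (F s (a k, zz)) (F s (b, vzero)) _ e Pb (Hck s ltac:(lra)) eq_refl Hpn ltac:(lra) Hqn).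
    lra. }
  exists (astar, zz). split.
  - split; [split; auto| split; auto].
  - intros p' [[Hp' Hcp'] [_ Hsp']].
    assert (Ep' : p' = (fst p', zz)) by (destruct p'; simpl in *; subst; auto).
    assert (Hz : nsq n (vsub astar (fst p')) = 0).
    { assert (Hpa : supp n (fst p')) by apply Hp'.
      assert (Hall : forall T, 0 <= T -> nsq n (vsub astar (fst p')) * (1 + 2 * c1 * T) <= C).
      { intros T HT. apply Hpair; auto. intros s Hs. split. apply Hmem; lra. rewrite <- Ep'. apply Hcp'; lra. }
      pose proof (nsq_nonneg n (vsub astar (fst p'))). apply NNPP; intros Hn.
      set (x := nsq n (vsub astar (fst p'))) in *.
      assert (Hx : 0 < x) by lra.
      specialize (Hall (C / (2 * c1 * x)) ltac:(apply Rlt_le, Rdiv_lt_0_compat; nra)).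
      replace (x * (1 + 2 * c1 * (C / (2 * c1 * x)))) with (x + C) in Hall by (field; lra). lra. }
    apply (pt_eq_of n m); auto. unfold yN. rewrite Ep'. simpl. rewrite Hz, nsq_self_sub. ring.
Qed.

Lemma lin_expand n (Lm : vec -> vec) :
  (forall a b, supp n a -> supp n b -> Lm (vadd a b) = vadd (Lm a) (Lm b)) ->
  (forall c a, supp n a -> Lm (vscal c a) = vscal c (Lm a)) ->
  forall a, supp n a -> forall r, Lm a r = sumR n (fun j => a j * Lm (evec j) r).
Proof.
  intros HA HM a Ha r.
  assert (Hz : forall i, Lm vzero i = 0).
  { intros i. assert (vzero = vscal 0 vzero) by (apply functional_extensionality; intros; unfold vscal, vzero; ring).
    rewrite H, HM. unfold vscal; ring. apply supp_vzero. }
  assert (He : forall j, (j < n)%nat -> supp n (evec j)).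
  { intros j Hj i Hi. unfold evec. destruct (Nat.eqb_spec i j); auto; lia. }
  assert (Ht : forall N, (N <= n)%nat -> supp n (trunc N a)).
  { intros N HN i Hi. unfold trunc. destruct (Nat.ltb_spec i N); auto; lia. }
  assert (Hlin : forall N, (N <= n)%nat -> forall i, Lm (trunc N a) i = sumR N (fun j => a j * Lm (evec j) i)).
  { intros N. induction N; intros HN i.
    - simpl. replace (trunc 0 a) with vzero. apply Hz. apply functional_extensionality; intros; unfold trunc; simpl; auto.
    - replace (trunc (S N) a) with (vadd (trunc N a) (vscal (a N) (evec N))).
      rewrite HA. unfold vadd. rewrite HM. unfold vscal. rewrite IHN by lia. simpl. ring.
      apply He; lia. apply Ht; lia. apply supp_vscal, He; lia.
      apply functional_extensionality; intros j. unfold vadd, vscal, trunc, evec.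
      destruct (Nat.ltb_spec j N); destruct (Nat.ltb_spec j (S N)); destruct (Nat.eqb_spec j N); try lia; subst; ring. }
  replace a with (trunc n a) at 1. apply Hlin; auto.
  apply functional_extensionality; intros j. unfold trunc. destruct (Nat.ltb_spec j n); auto. rewrite Ha; auto; lia.
Qed.

Lemma coord_abs_le k v i : (i < k)%nat -> Rabs (v i) <= norm k v.
Proof. intros Hi. pose proof (coord_le k v i Hi). rewrite <- norm_sq' in H. pose proof (norm_nonneg k v).
  pose proof (Rabs_pos (v i)).
  assert (Rabs (v i) * Rabs (v i) <= norm k v * norm k v).
  { rewrite <- Rabs_mult. rewrite Rabs_right; auto. pose proof (Rle_0_sqr (v i)) as Hq. unfold Rsqr in Hq. lra. }
  nra. Qed.

Lemma sumR_abs_le k f : Rabs (sumR k f) <= sumR k (fun i => Rabs (f i)).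
Proof. induction k; simpl. rewrite Rabs_R0; lra. eapply Rle_trans. apply Rabs_triang. lra. Qed.

Lemma pointwise_bound n m k (L : pt -> vec) : linmap n m k L ->
  exists K0, 0 <= K0 /\ forall h, inX n m h -> norm k (L h) <= K0 * normX n m h.
Proof.
  intros [LS [LA LM]].
  set (Ma := fun r => sumR n (fun j => Rabs (L (evec j, vzero) r))).
  set (Mz := fun r => sumR m (fun j => Rabs (L (vzero, evec j) r))).
  set (Mr := fun r => Ma r + Mz r).
  assert (HMr : forall r, 0 <= Mr r).
  { intros r. unfold Mr, Ma, Mz. pose proof (sumR_nonneg n (fun j => Rabs (L (evec j, vzero) r)) (fun i _ => Rabs_pos _)).
    pose proof (sumR_nonneg m (fun j => Rabs (L (vzero, evec j) r)) (fun i _ => Rabs_pos _)). lra. }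
  exists (sqrt (sumR k (fun r => Mr r * Mr r))). split. apply sqrt_pos.
  intros h [Ha Hz].
  assert (HLa : forall a, supp n a -> forall r, L (a, vzero) r = sumR n (fun j => a j * L (evec j, vzero) r)).
  { apply (lin_expand n (fun a => L (a, vzero))).
    - intros a b Ha' Hb'. rewrite pair_vadd. apply LA; split; auto; apply supp_vzero.
    - intros c a Ha'. rewrite pair_vscal. apply LM; split; auto; apply supp_vzero. }
  assert (HLz : forall z, supp m z -> forall r, L (vzero, z) r = sumR m (fun j => z j * L (vzero, evec j) r)).
  { apply (lin_expand m (fun z => L (vzero, z))).
    - intros a b Ha' Hb'. replace (vzero, vadd a b) with (padd (vzero, a) (vzero, b)). apply LA; split; auto; apply supp_vzero.
      unfold padd; simpl; f_equal; apply functional_extensionality; intros; unfold vadd, vzero; ring.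
    - intros c a Ha'. replace (vzero, vscal c a) with (pscal c (vzero, a)). apply LM; split; auto; apply supp_vzero.
      unfold pscal; simpl; f_equal; apply functional_extensionality; intros; unfold vscal, vzero; ring. }
  assert (Hsplit : forall r, L h r = L (fst h, vzero) r + L (vzero, snd h) r).
  { intros r. rewrite (linmap_split n m k L h); auto. split; auto. split; auto. }
  set (X := normX n m h).
  assert (HX : 0 <= X) by apply normX_nonneg.
  assert (Hcoord : forall r, Rabs (L h r) <= X * Mr r).
  { intros r. rewrite Hsplit, HLa, HLz; auto. unfold Mr, Ma, Mz.
    eapply Rle_trans. apply Rabs_triang. rewrite Rmult_plus_distr_l, <- !sumR_scal.
    apply Rplus_le_compat; (eapply Rle_trans; [apply sumR_abs_le|]); apply sumR_le; intros i Hi; rewrite Rabs_mult;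
      apply Rmult_le_compat_r; try apply Rabs_pos.
    - eapply Rle_trans. apply coord_abs_le; eauto. apply norm_fst_le.
    - eapply Rle_trans. apply coord_abs_le; eauto. apply norm_snd_le. }
  apply norm_le_of. apply Rmult_le_pos; auto; apply sqrt_pos.
  set (S := sumR k (fun r => Mr r * Mr r)).
  assert (HS : sqrt S * sqrt S = S) by (apply sqrt_sqrt; apply sumR_nonneg; intros; specialize (HMr i); nra).
  assert (E : sqrt S * X * (sqrt S * X) = (X * X) * (sqrt S * sqrt S)) by ring.
  rewrite E, HS. unfold S. unfold nsq, dot. rewrite <- sumR_scal.
  apply sumR_le. intros r Hr. specialize (Hcoord r). pose proof (Rabs_pos (L h r)). specialize (HMr r).
  assert (Rabs (L h r) * Rabs (L h r) <= (X * Mr r) * (X * Mr r)) by (apply Rmult_le_compat; auto).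
  rewrite <- Rabs_mult in H0. rewrite Rabs_right in H0. nra. pose proof (Rle_0_sqr (L h r)) as Hq. unfold Rsqr in Hq. lra.
Qed.

Lemma vec_eq_zero k v : supp k v -> (forall i, (i < k)%nat -> v i = 0) -> v = vzero.
Proof. intros Hs H. apply functional_extensionality; intros i. destruct (Nat.lt_ge_cases i k); [apply H|apply Hs]; auto. Qed.

Lemma opnorm_bound p q (Lf : vec -> vec) r :
  is_opnorm p q Lf r -> (forall c v, supp p v -> Lf (vscal c v) = vscal c (Lf v)) ->
  0 <= r /\ forall v, supp p v -> norm q (Lf v) <= r * norm p v.
Proof.
  intros [Hub _] HM.
  assert (H0 : forall i, Lf vzero i = 0).
  { intros i. assert (vzero = vscal 0 vzero) by (apply functional_extensionality; intros; unfold vscal, vzero; ring).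
    rewrite H, HM. unfold vscal; ring. apply supp_vzero. }
  assert (Hn0 : norm q (Lf vzero) = 0).
  { replace (Lf vzero) with vzero. unfold norm. fold (nsq q vzero). rewrite nsq_vzero. apply sqrt_0.
    apply functional_extensionality; intros; rewrite H0; auto. }
  assert (Hr : 0 <= r).
  { rewrite <- Hn0. apply Hub. exists vzero. split. apply supp_vzero. split; auto.
    unfold norm. fold (nsq p vzero). rewrite nsq_vzero, sqrt_0. lra. }
  split; auto. intros v Hv.
  pose proof (norm_nonneg p v).
  destruct (Req_dec (norm p v) 0) as [E|E].
  - rewrite (vec_eq_zero p v Hv (norm_zero_coord p v E)). rewrite Hn0. pose proof (norm_nonneg p vzero). nra.
  - set (c := / norm p v).
    assert (Hc : 0 < c) by (unfold c; apply Rinv_0_lt_compat; lra).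
    assert (Hu : norm q (Lf (vscal c v)) <= r).
    { apply Hub. exists (vscal c v). split. apply supp_vscal; auto. split; auto.
      rewrite norm_scal. rewrite Rabs_right by lra. unfold c. right. field. auto. }
    rewrite HM, norm_scal, Rabs_right in Hu by (auto; lra).
    unfold c in Hu. apply Rmult_le_compat_r with (r := norm p v) in Hu; auto.
    replace (/ norm p v * norm q (Lf v) * norm p v) with (norm q (Lf v)) in Hu by (field; auto). lra.
Qed.

Lemma vec_cont (v : R -> vec) t0 : forall k, (forall i, (i < k)%nat -> forall eps, 0 < eps -> exists del, 0 < del /\
    forall s, 0 <= s -> Rabs (s - t0) < del -> Rabs (v s i - v t0 i) < eps) ->
  forall eps, 0 < eps -> exists del, 0 < del /\ forall s, 0 <= s -> Rabs (s - t0) < del -> nsq k (vsub (v s) (v t0)) < eps.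
Proof.
  induction k; intros H eps Heps.
  - exists 1. split. lra. intros. unfold nsq, dot. simpl. lra.
  - destruct (IHk (fun i Hi => H i ltac:(lia)) (eps / 2) ltac:(lra)) as [d1 [Hd1 HN1]].
    assert (Hr : 0 < sqrt (eps / 2)) by (apply sqrt_lt_R0; lra).
    destruct (H k ltac:(lia) _ Hr) as [d2 [Hd2 HN2]].
    exists (Rmin d1 d2). split. apply Rmin_pos; auto. intros s Hs Hlt.
    pose proof (Rmin_l d1 d2); pose proof (Rmin_r d1 d2).
    specialize (HN1 s Hs ltac:(lra)). specialize (HN2 s Hs ltac:(lra)).
    unfold nsq, dot. simpl. fold (dot k (vsub (v s) (v t0)) (vsub (v s) (v t0))). fold (nsq k (vsub (v s) (v t0))).
    assert (Hsq : vsub (v s) (v t0) k * vsub (v s) (v t0) k < eps / 2).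
    { unfold vsub. pose proof (Rabs_pos (v s k - v t0 k)).
      replace ((v s k - v t0 k) * (v s k - v t0 k)) with (Rabs (v s k - v t0 k) * Rabs (v s k - v t0 k)).
      replace (eps / 2) with (sqrt (eps / 2) * sqrt (eps / 2)) by (apply sqrt_sqrt; lra).
      apply Rmult_le_0_lt_compat; auto.
      rewrite <- Rabs_mult. pose proof (Rle_0_sqr (v s k - v t0 k)). unfold Rsqr in *. rewrite Rabs_right; lra. }
    lra.
Qed.

Lemma phi_cont n m Gam f g phi x t0 : flow_inv n m Gam f g phi -> Gam x -> 0 <= t0 ->
  forall eps, 0 < eps -> exists del, 0 < del /\ forall s, 0 <= s -> Rabs (s - t0) < del ->
    normX n m (psub (phi s x) (phi t0 x)) < eps.
Proof.
  intros Hf Hx Ht0 eps Heps. destruct (Hf x Hx) as [_ Hfl]. destruct (Hfl t0 Ht0) as [_ [Da Dz]].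
  destruct (vec_cont (fun s => fst (phi s x)) t0 n (fun i Hi => dn_cont _ _ _ Ht0 (Da i Hi)) (eps * eps / 2)) as [d1 [Hd1 H1]].
  { nra. }
  destruct (vec_cont (fun s => snd (phi s x)) t0 m (fun i Hi => dn_cont _ _ _ Ht0 (Dz i Hi)) (eps * eps / 2)) as [d2 [Hd2 H2]].
  { nra. }
  exists (Rmin d1 d2). split. apply Rmin_pos; auto. intros s Hs Hlt.
  pose proof (Rmin_l d1 d2); pose proof (Rmin_r d1 d2).
  specialize (H1 s Hs ltac:(lra)). specialize (H2 s Hs ltac:(lra)). cbv beta in H1, H2.
  unfold normX. simpl. fold (nsq n (vsub (fst (phi s x)) (fst (phi t0 x)))). fold (nsq m (vsub (snd (phi s x)) (snd (phi t0 x)))).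
  rewrite <- (sqrt_Rsqr eps) by lra. apply sqrt_lt_1_alt. split.
  pose proof (nsq_nonneg n (vsub (fst (phi s x)) (fst (phi t0 x)))). pose proof (nsq_nonneg m (vsub (snd (phi s x)) (snd (phi t0 x)))). lra.
  unfold Rsqr. lra.
Qed.

Lemma C1_linmap n m k U G DG y : C1_on n m k U G DG -> U y -> linmap n m k (DG y).
Proof. intros [_ [HD _]] Hy. destruct (HD y Hy) as [A1 [A2 [A3 _]]]. split; auto. Qed.

Lemma traj_bound n m k U Gam f g phi G DG x : C1_on n m k U G DG -> (forall y, Gam y -> U y) ->
  flow_inv n m Gam f g phi -> Gam x -> forall T, 0 <= T -> exists K, 0 < K /\
  forall t, 0 <= t <= T -> forall h, inX n m h -> norm k (DG (phi t x) h) <= K * normX n m h.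
Proof.
  intros HC HGU Hfl Hx T HT.
  assert (HG : forall t, 0 <= t -> Gam (phi t x)) by (intros t Ht; destruct (Hfl x Hx) as [_ H]; apply (H t Ht)).
  destruct (unif_bound T (fun t K => forall h, inX n m h -> norm k (DG (phi t x) h) <= K * normX n m h) HT) as [K HK].
  - intros t K K' H HKK h Hh. eapply Rle_trans. apply H; auto. apply Rmult_le_compat_r; auto. apply normX_nonneg.
  - intros t0 Ht0. set (y0 := phi t0 x).
    assert (HU0 : U y0) by (apply HGU, HG; lra).
    destruct (pointwise_bound n m k (DG y0) (C1_linmap n m k U G DG y0 HC HU0)) as [K0 [HK0 Hb0]].
    destruct HC as [_ [_ Hcont]]. destruct (Hcont y0 HU0 1 Rlt_0_1) as [del [Hdel Hc]].
    destruct (phi_cont n m Gam f g phi x t0 Hfl Hx ltac:(lra) del Hdel) as [eta [Heta Hp]].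
    exists eta. split; auto. exists (1 + K0). intros t Ht Htt h Hh.
    assert (Hd : norm k (vsub (DG (phi t x) h) (DG y0 h)) <= 1 * normX n m h).
    { apply Hc; auto. apply HGU, HG; lra. apply Hp; lra. }
    replace (DG (phi t x) h) with (vadd (vsub (DG (phi t x) h) (DG y0 h)) (DG y0 h)).
    eapply Rle_trans. apply norm_triangle. specialize (Hb0 h Hh). lra.
    apply functional_extensionality; intros; unfold vadd, vsub; ring.
  - exists (Rmax K 1). split. pose proof (Rmax_r K 1); lra.
    intros t Ht h Hh. eapply Rle_trans. apply HK; auto. apply Rmult_le_compat_r. apply normX_nonneg. apply Rmax_l.
Qed.

Lemma LinSys_of n m U Gam f g Df Dg phi x : Hyp2 n m U f g Df Dg -> Hyp3 n m U Gam f g phi -> Gam x ->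
  LinSys n m (fun t => Df (phi t x)) (fun t => Dg (phi t x)).
Proof.
  intros [C1f [C1g [alpha [ell [c1 [_ [_ [Hc1 Hcone]]]]]]]] [HGU [Hfl _]] Hx.
  assert (HG : forall t, 0 <= t -> U (phi t x)).
  { intros t Ht; destruct (Hfl x Hx) as [_ H]; apply HGU, (H t Ht). }
  split; [|split].
  - intros t Ht. split; eapply C1_linmap; eauto.
  - exists c1. split; auto. intros t Ht. set (y := phi t x).
    destruct (Hcone y (HG t Ht)) as [Hal [Hl [Qa [Qz [r1 [r2 [O1 [O2 Hineq]]]]]]]].
    pose proof (C1_linmap n m n U f Df y C1f (HG t Ht)) as [LS1 [LA1 LM1]].
    pose proof (C1_linmap n m m U g Dg y C1g (HG t Ht)) as [LS2 [LA2 LM2]].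
    destruct (opnorm_bound m n (fun z' => Df y (vzero, z')) r1 O1) as [Hr1 B1].
    { intros c v Hv. cbv beta. replace (vzero, vscal c v) with (pscal c (vzero, v)). apply LM1. split; auto; apply supp_vzero.
      unfold pscal; simpl; f_equal; apply functional_extensionality; intros; unfold vscal, vzero; ring. }
    destruct (opnorm_bound n m (fun a' => Dg y (a', vzero)) r2 O2) as [Hr2 B2].
    { intros c v Hv. cbv beta. rewrite pair_vscal. apply LM2. split; auto; apply supp_vzero. }
    exists (alpha y), (ell y), r1, r2. repeat split; auto.
    + intros a Ha. rewrite <- norm_sq. apply Qa; auto.
    + intros z Hz. rewrite <- norm_sq. apply Qz; auto.
  - intros T HT.
    destruct (traj_bound n m n U Gam f g phi f Df x C1f HGU Hfl Hx T HT) as [K1 [HK1 Hb1]].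
    destruct (traj_bound n m m U Gam f g phi g Dg x C1g HGU Hfl Hx T HT) as [K2 [HK2 Hb2]].
    exists (Rmax K1 K2). split. pose proof (Rmax_l K1 K2); lra.
    intros t Ht h Hh. pose proof (normX_nonneg n m h). split.
    + eapply Rle_trans. apply Hb1; auto. apply Rmult_le_compat_r; auto. apply Rmax_l.
    + eapply Rle_trans. apply Hb2; auto. apply Rmult_le_compat_r; auto. apply Rmax_r.
Qed.

Lemma Lyap_zero n m p : Lyap n m p pzero = hL n m p.
Proof.
  unfold Lyap, hL. rewrite !norm_sq. simpl.
  assert (E : forall k v, nsq k (vsub vzero v) = nsq k v).
  { intros k v. rewrite nsq_sub, nsq_vzero. unfold dot. rewrite (sumR_ext k _ (fun _ => 0)).
    rewrite sumR_zero. ring. intros; unfold vzero; ring. }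
  rewrite !E. reflexivity.
Qed.

Theorem lemma2p9 (n m : nat) (U Gam : pt -> Prop) (f g : pt -> vec)
  (Df Dg : pt -> pt -> vec) (phi : R -> pt -> pt) (Q : R -> pt -> pt -> pt) :
  Hyp1 n m U ->
  Hyp2 n m U f g Df Dg ->
  Hyp3 n m U Gam f g phi ->
  fund_sol n m Gam Df Dg phi Q ->
  forall x, Gam x -> forall zz, supp m zz ->
    exists! p, Tset n m Q x p /\ Ifib n m zz p.
Proof.
  intros H1 H2 H3 H4 x Hx zz Hzz.
  pose proof (LinSys_of n m U Gam f g Df Dg phi x H2 H3 Hx) as HL.
  assert (HQ : qsol n m (fun t => Df (phi t x)) (fun t => Dg (phi t x)) (fun t v => Q t x v)).
  { intros v Hv. destruct (H4 x Hx v Hv) as [E0 Hs]. split; auto. }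
  destruct (main_abstract _ _ _ _ _ HL HQ zz Hzz) as [p [[[Hp Hc] Hf] Hu]].
  exists p. split.
  - split. split; auto. intros t Ht. rewrite Lyap_zero. apply Hc; auto. exact Hf.
  - intros p' [[Hp' Hc'] Hf']. apply Hu. split; auto. split; auto. intros t Ht. rewrite <- Lyap_zero. apply Hc'; auto.
Qed.
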